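(* Let $A$ be a simple cusp algebra, let $\alpha \in \mathbb{D}\setminus\{0\}$, and let $\psi_\alpha \in A$ be a function with a simple zero at $\alpha$ and no other zeroes in $\mathbb{D}$. If $f \in A$ and $f(\alpha) = 0$, then $f/\psi_\alpha \in A$.
   Context: $\mathbb{D}$ is the open unit disk, $O(\mathbb{D})$ the holomorphic functions on it. A cusp algebra is a unital subalgebra $A \subseteq O(\mathbb{D})$ with $\dim(O(\mathbb{D})/A) < \infty$ and $z^m O(\mathbb{D}) \subseteq A$ for some $m \ge 2$. It is simple if $\max\{n : f^{(j)}(0)=0\ \forall f\in A,\ 1\le j\le n\} = 1$. (Such a $\psi_\alpha$ exists for every $\alpha \in \mathbb{D}\setminus\{0\}$.) *)

(* Defs.v *)
From Stdlib Require Import Reals List.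
Open Scope R_scope.

Definition Cpx := (R * R)%type.
Definition C0 : Cpx := (0, 0).
Definition C1 : Cpx := (1, 0).
Definition Cadd (z w : Cpx) : Cpx := (fst z + fst w, snd z + snd w).
Definition Copp (z : Cpx) : Cpx := (- fst z, - snd z).
Definition Csub (z w : Cpx) : Cpx := Cadd z (Copp w).
Definition Cmul (z w : Cpx) : Cpx :=
  (fst z * fst w - snd z * snd w, fst z * snd w + snd z * fst w).
Definition Cinv (z : Cpx) : Cpx :=
  (fst z / (fst z * fst z + snd z * snd z),
   - snd z / (fst z * fst z + snd z * snd z)).
Definition Cdiv (z w : Cpx) : Cpx := Cmul z (Cinv w).
Definition Cnorm (z : Cpx) : R := sqrt (fst z * fst z + snd z * snd z).
Fixpoint Cpow (z : Cpx) (n : nat) : Cpx :=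
  match n with O => C1 | S k => Cmul z (Cpow z k) end.

Definition inD (z : Cpx) : Prop := Cnorm z < 1.

Definition has_cderiv (f : Cpx -> Cpx) (z l : Cpx) : Prop :=
  forall eps, 0 < eps -> exists del, 0 < del /\
    forall h, h <> C0 -> Cnorm h < del -> inD (Cadd z h) ->
      Cnorm (Csub (Cdiv (Csub (f (Cadd z h)) (f z)) h) l) < eps.

Definition holo (f : Cpx -> Cpx) : Prop :=
  forall z, inD z -> exists l, has_cderiv f z l.

Definition deriv_on (f g : Cpx -> Cpx) : Prop :=
  forall z, inD z -> has_cderiv f z (g z).

(* nth_deriv n f g : g is (a representative on D of) f^{(n)} *)
Fixpoint nth_deriv (n : nat) (f g : Cpx -> Cpx) : Prop :=
  match n with
  | O => forall z, inD z -> g z = f z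
  | S k => exists h, nth_deriv k f h /\ deriv_on h g
  end.

Definition deriv_vanishes (f : Cpx -> Cpx) (n : nat) (w : Cpx) : Prop :=
  forall g, nth_deriv n f g -> g w = C0.

(* A subset of O(D) is modelled as a predicate on Cpx -> Cpx that only depends on
   the values on D. *)
Definition unital_subalgebra (A : (Cpx -> Cpx) -> Prop) : Prop :=
  (forall f, A f -> holo f) /\
  (forall f g, A f -> (forall z, inD z -> f z = g z) -> A g) /\
  A (fun _ => C1) /\
  (forall f g, A f -> A g -> A (fun z => Cadd (f z) (g z))) /\
  (forall (c : Cpx) f, A f -> A (fun z => Cmul c (f z))) /\
  (forall f g, A f -> A g -> A (fun z => Cmul (f z) (g z))).

Fixpoint lin_comb (cs : list Cpx) (gs : list (Cpx -> Cpx)) (z : Cpx) : Cpx :=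
  match cs, gs with
  | c :: cs', g :: gs' => Cadd (Cmul c (g z)) (lin_comb cs' gs' z)
  | _, _ => C0
  end.

(* dim (O(D)/A) < infinity: O(D) = A + span of finitely many functions *)
Definition finite_codim (A : (Cpx -> Cpx) -> Prop) : Prop :=
  exists gs : list (Cpx -> Cpx), Forall holo gs /\
    forall f, holo f -> exists a cs, A a /\ length cs = length gs /\
      forall z, inD z -> f z = Cadd (a z) (lin_comb cs gs z).

Definition cusp_algebra (A : (Cpx -> Cpx) -> Prop) : Prop :=
  unital_subalgebra A /\ finite_codim A /\
  exists m : nat, (2 <= m)%nat /\
    forall h, holo h -> A (fun z => Cmul (Cpow z m) (h z)).

Definition vanishing_order_ok (A : (Cpx -> Cpx) -> Prop) (n : nat) : Prop :=
  forall f, A f -> forall j, (1 <= j <= n)%nat -> deriv_vanishes f j C0.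

(* max { n | P n } = 1 *)
Definition simple_cusp (A : (Cpx -> Cpx) -> Prop) : Prop :=
  vanishing_order_ok A 1 /\ forall n, vanishing_order_ok A n -> (n <= 1)%nat.

(* Main.v *)
Require Import Defs.
From Stdlib Require Import Reals List.
From Stdlib Require Import Lra Lia Psatz Classical ClassicalEpsilon FunctionalExtensionality Field Ring.
Open Scope R_scope.

Notation Cone := Defs.C1.
Notation Czero := Defs.C0.

Lemma Cpx_eq : forall a b c d : R, a = c -> b = d -> (a, b) = (c, d).
Proof. intros; subst; reflexivity. Qed.

Ltac cdestr := repeat match goal with
  | z : Cpx |- _ => destruct z
  | z : (R * R)%type |- _ => destruct z end.

Lemma Cring : ring_theory Czero Cone Cadd Cmul Csub Copp (@eq Cpx).
Proof.
  constructor; intros; cdestr; unfold Defs.C0, Defs.C1, Cadd, Cmul, Csub, Copp; simpl;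
  try reflexivity; apply Cpx_eq; ring.
Qed.

Lemma Cfield : field_theory Czero Cone Cadd Cmul Csub Copp Cdiv Cinv (@eq Cpx).
Proof.
  constructor.
  - exact Cring.
  - unfold Defs.C0, Defs.C1; intro H; injection H; lra.
  - reflexivity.
  - intros p Hp; cdestr; unfold Cinv, Cmul, Defs.C1; simpl.
    assert (r * r + r0 * r0 <> 0).
    { intro H. apply Hp. assert (r = 0) by nra. assert (r0 = 0) by nra. subst; reflexivity. }
    apply Cpx_eq; field; auto.
Qed.

Add Field Cfld : Cfield.



Lemma Cnorm_ge0 : forall z, 0 <= Cnorm z.
Proof. intros; unfold Cnorm; apply sqrt_pos. Qed.

Lemma Cnorm_sq : forall z, Cnorm z * Cnorm z = fst z * fst z + snd z * snd z.
Proof. intros; unfold Cnorm; apply sqrt_sqrt; nra. Qed.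

Lemma Cnorm_C0 : Cnorm Czero = 0.
Proof. unfold Cnorm, Defs.C0; simpl. replace (0*0+0*0) with 0 by ring. apply sqrt_0. Qed.

Lemma Cnorm_eq0 : forall z, Cnorm z = 0 -> z = Czero.
Proof. intros [x y] H. pose proof (Cnorm_sq (x,y)). rewrite H in H0. simpl in H0.
  unfold Defs.C0. apply Cpx_eq; nra. Qed.

Lemma Cnorm_pos : forall z, z <> Czero -> 0 < Cnorm z.
Proof. intros. destruct (Cnorm_ge0 z); auto. exfalso; apply H, Cnorm_eq0; auto. Qed.

Lemma Cnorm_mul : forall z w, Cnorm (Cmul z w) = Cnorm z * Cnorm w.
Proof. intros [a b] [c d]; unfold Cnorm, Cmul; simpl.
  rewrite <- sqrt_mult by nra. f_equal. ring. Qed.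

Lemma Cnorm_tri : forall z w, Cnorm (Cadd z w) <= Cnorm z + Cnorm w.
Proof. intros [a b] [c d].
  pose proof (Cnorm_ge0 (a,b)); pose proof (Cnorm_ge0 (c,d)).
  pose proof (Cnorm_sq (a,b)); pose proof (Cnorm_sq (c,d)).
  pose proof (Cnorm_ge0 (Cadd (a,b) (c,d))); pose proof (Cnorm_sq (Cadd (a,b) (c,d))).
  unfold Cadd in *; simpl in *.
  set (u := Cnorm (a,b)) in *; set (v := Cnorm (c,d)) in *; set (s := Cnorm (a+c,b+d)) in *.
  assert (a*c+b*d <= u*v).
  { assert ((a*c+b*d)*(a*c+b*d) <= (u*v)*(u*v)).
    { replace ((u*v)*(u*v)) with ((u*u)*(v*v)) by ring. rewrite H1, H2.
      pose proof (Rle_0_sqr (a*d-b*c)). unfold Rsqr in *. nra. }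
    destruct (Rle_dec (a*c+b*d) 0); [nra|].
    apply Rsqr_incr_0_var; try unfold Rsqr; nra. }
  apply Rsqr_incr_0_var; try unfold Rsqr; nra.
Qed.

Lemma Cnorm_opp : forall z, Cnorm (Copp z) = Cnorm z.
Proof. intros [a b]; unfold Cnorm, Copp; simpl; f_equal; ring. Qed.

Lemma Cnorm_sub_sym : forall z w, Cnorm (Csub z w) = Cnorm (Csub w z).
Proof. intros. replace (Csub z w) with (Copp (Csub w z)) by ring. apply Cnorm_opp. Qed.

Lemma Cnorm_fst : forall z, Rabs (fst z) <= Cnorm z.
Proof. intros [a b]; simpl. pose proof (Cnorm_ge0 (a,b)); pose proof (Cnorm_sq (a,b)); simpl in *.
  apply Rsqr_incr_0_var; [|auto]. rewrite <- Rsqr_abs. unfold Rsqr; nra. Qed.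

Lemma Cnorm_snd : forall z, Rabs (snd z) <= Cnorm z.
Proof. intros [a b]; simpl. pose proof (Cnorm_ge0 (a,b)); pose proof (Cnorm_sq (a,b)); simpl in *.
  apply Rsqr_incr_0_var; [|auto]. rewrite <- Rsqr_abs. unfold Rsqr; nra. Qed.

Lemma Cnorm_le_abs : forall z, Cnorm z <= Rabs (fst z) + Rabs (snd z).
Proof. intros [a b]; simpl. pose proof (Cnorm_ge0 (a,b)); pose proof (Cnorm_sq (a,b)); simpl in *.
  pose proof (Rabs_pos a); pose proof (Rabs_pos b).
  apply Rsqr_incr_0_var; [|nra]. unfold Rsqr.
  assert (Rabs a * Rabs a = a * a) by (rewrite <- Rabs_mult; apply Rabs_right; nra).
  assert (Rabs b * Rabs b = b * b) by (rewrite <- Rabs_mult; apply Rabs_right; nra).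
  nra. Qed.

Lemma Cnorm_real : forall x, Cnorm (x, 0) = Rabs x.
Proof. intros; unfold Cnorm; simpl. replace (x*x+0*0) with (Rsqr x) by (unfold Rsqr; ring).
  apply sqrt_Rsqr_abs. Qed.

Lemma Cnorm_imag : forall x, Cnorm (0, x) = Rabs x.
Proof. intros; unfold Cnorm; simpl. replace (0*0+x*x) with (Rsqr x) by (unfold Rsqr; ring).
  apply sqrt_Rsqr_abs. Qed.

Lemma Cnorm_one : Cnorm Cone = 1.
Proof. unfold Defs.C1. rewrite Cnorm_real. apply Rabs_R1. Qed.

Lemma Cnorm_inv : forall z, z <> Czero -> Cnorm (Cinv z) = / Cnorm z.
Proof. intros. pose proof (Cnorm_pos z H).
  assert (Cnorm (Cmul z (Cinv z)) = 1). { replace (Cmul z (Cinv z)) with Cone by (field; auto). apply Cnorm_one. }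
  rewrite Cnorm_mul in H1. field_simplify_eq; [|lra]. lra. Qed.

Lemma Cnorm_div : forall z w, w <> Czero -> Cnorm (Cdiv z w) = Cnorm z / Cnorm w.
Proof. intros. unfold Cdiv. rewrite Cnorm_mul, Cnorm_inv; auto. Qed.

Lemma Cnorm_sub_tri : forall z w, Cnorm z - Cnorm w <= Cnorm (Csub z w).
Proof. intros. pose proof (Cnorm_tri (Csub z w) w). replace (Cadd (Csub z w) w) with z in H by ring. lra. Qed.

Lemma Cnorm_pow : forall z n, Cnorm (Cpow z n) = Cnorm z ^ n.
Proof. induction n; simpl. apply Cnorm_one. rewrite Cnorm_mul, IHn; auto. Qed.

Lemma Cneq0_norm : forall z, 0 < Cnorm z -> z <> Czero.
Proof. intros z H E; subst; rewrite Cnorm_C0 in H; lra. Qed.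

Lemma Cmul_neq0 : forall z w, z <> Czero -> w <> Czero -> Cmul z w <> Czero.
Proof. intros. apply Cneq0_norm. rewrite Cnorm_mul. apply Rmult_lt_0_compat; apply Cnorm_pos; auto. Qed.

Definition ccont (f : Cpx -> Cpx) (z : Cpx) : Prop :=
  forall e, 0 < e -> exists d, 0 < d /\ forall w, Cnorm (Csub w z) < d -> Cnorm (Csub (f w) (f z)) < e.

Definition Ceq_dec (z w : Cpx) : {z = w} + {z <> w}.
Proof. destruct z as [a b], w as [c d].
  destruct (Req_EM_T a c); [destruct (Req_EM_T b d)|].
  - left; subst; auto.
  - right; intro H; injection H; auto.
  - right; intro H; injection H; auto.
Defined.

Definition slope (f : Cpx -> Cpx) (z l : Cpx) (w : Cpx) : Cpx :=
  if Ceq_dec w z then l else Cdiv (Csub (f w) (f z)) (Csub w z).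

Definition cdif (f : Cpx -> Cpx) (z l : Cpx) : Prop := ccont (slope f z l) z.

Lemma sub_neq0 : forall w z, w <> z -> Csub w z <> Czero.
Proof. intros w z H E. apply H. replace w with (Cadd (Csub w z) z) by ring. rewrite E. ring. Qed.

Lemma slope_id : forall f z l w, f w = Cadd (f z) (Cmul (slope f z l w) (Csub w z)).
Proof. intros. unfold slope. destruct (Ceq_dec w z).
  - subst. ring.
  - field. apply sub_neq0; auto. Qed.

Lemma slope_at : forall f z l, slope f z l z = l.
Proof. intros; unfold slope; destruct (Ceq_dec z z); congruence. Qed.

Lemma slope_ne : forall f z l w, w <> z -> slope f z l w = Cdiv (Csub (f w) (f z)) (Csub w z).
Proof. intros; unfold slope; destruct (Ceq_dec w z); congruence. Qed.

Lemma ccont_local : forall f g z r, 0 < r -> (forall w, Cnorm (Csub w z) < r -> f w = g w) ->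
  ccont f z -> ccont g z.
Proof. intros f g z r Hr Heq H e He. destruct (H e He) as [d [Hd Hw]].
  exists (Rmin d r); split. apply Rmin_pos; auto.
  intros w Hwz. rewrite <- (Heq w), <- (Heq z).
  apply Hw. eapply Rlt_le_trans; [apply Hwz| apply Rmin_l].
  replace (Csub z z) with Czero by ring. rewrite Cnorm_C0; auto.
  eapply Rlt_le_trans; [apply Hwz| apply Rmin_r]. Qed.

Lemma ccont_ext : forall f g z, (forall w, f w = g w) -> ccont f z -> ccont g z.
Proof. intros. apply (ccont_local f g z 1); auto; lra. Qed.

Lemma ccont_const : forall c z, ccont (fun _ => c) z.
Proof. intros c z e He. exists 1; split; [lra|]. intros. replace (Csub c c) with Czero by ring.
  rewrite Cnorm_C0; auto. Qed.

Lemma ccont_id : forall z, ccont (fun w => w) z.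
Proof. intros z e He. exists e; split; auto. Qed.

Lemma ccont_add : forall f g z, ccont f z -> ccont g z -> ccont (fun w => Cadd (f w) (g w)) z.
Proof. intros f g z Hf Hg e He.
  destruct (Hf (e/2)) as [d1 [Hd1 H1]]; [lra|]. destruct (Hg (e/2)) as [d2 [Hd2 H2]]; [lra|].
  exists (Rmin d1 d2); split; [apply Rmin_pos; auto|]. intros w Hw.
  replace (Csub (Cadd (f w) (g w)) (Cadd (f z) (g z))) with (Cadd (Csub (f w) (f z)) (Csub (g w) (g z))) by ring.
  eapply Rle_lt_trans; [apply Cnorm_tri|].
  assert (Cnorm (Csub w z) < d1) by (eapply Rlt_le_trans; [apply Hw|apply Rmin_l]).
  assert (Cnorm (Csub w z) < d2) by (eapply Rlt_le_trans; [apply Hw|apply Rmin_r]).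
  specialize (H1 w H); specialize (H2 w H0); lra. Qed.

Lemma ccont_mul : forall f g z, ccont f z -> ccont g z -> ccont (fun w => Cmul (f w) (g w)) z.
Proof. intros f g z Hf Hg e He.
  set (K := 1 + Cnorm (f z) + Cnorm (g z)).
  assert (HK : 1 <= K) by (unfold K; pose proof (Cnorm_ge0 (f z)); pose proof (Cnorm_ge0 (g z)); lra).
  set (eta := Rmin 1 (e / (2 * K))).
  assert (Heta : 0 < eta) by (apply Rmin_pos; [lra| apply Rdiv_lt_0_compat; lra]).
  destruct (Hf eta Heta) as [d1 [Hd1 H1]]. destruct (Hg eta Heta) as [d2 [Hd2 H2]].
  exists (Rmin d1 d2); split; [apply Rmin_pos; auto|]. intros w Hw.
  assert (Cnorm (Csub w z) < d1) by (eapply Rlt_le_trans; [apply Hw|apply Rmin_l]).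
  assert (Cnorm (Csub w z) < d2) by (eapply Rlt_le_trans; [apply Hw|apply Rmin_r]).
  specialize (H1 w H); specialize (H2 w H0).
  replace (Csub (Cmul (f w) (g w)) (Cmul (f z) (g z))) with
    (Cadd (Cmul (Csub (f w) (f z)) (Csub (g w) (g z)))
      (Cadd (Cmul (Csub (f w) (f z)) (g z)) (Cmul (f z) (Csub (g w) (g z))))) by ring.
  eapply Rle_lt_trans; [apply Cnorm_tri|].
  eapply Rle_lt_trans; [apply Rplus_le_compat_l; apply Cnorm_tri|].
  rewrite !Cnorm_mul.
  assert (eta <= 1) by apply Rmin_l. assert (eta <= e/(2*K)) by apply Rmin_r.
  pose proof (Cnorm_ge0 (Csub (f w) (f z))). pose proof (Cnorm_ge0 (Csub (g w) (g z))).
  pose proof (Cnorm_ge0 (f z)). pose proof (Cnorm_ge0 (g z)).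
  assert (eta * K <= e/2). { replace (e/2) with ((e/(2*K))*K) by (field; lra). apply Rmult_le_compat_r; lra. }
  unfold K in *.
  assert (Cnorm (Csub (f w) (f z)) * Cnorm (Csub (g w) (g z)) <= eta * eta) by (apply Rmult_le_compat; lra).
  assert (Cnorm (Csub (f w) (f z)) * Cnorm (g z) <= eta * Cnorm (g z)) by (apply Rmult_le_compat_r; lra).
  assert (Cnorm (f z) * Cnorm (Csub (g w) (g z)) <= Cnorm (f z) * eta) by (apply Rmult_le_compat_l; lra).
  assert (eta * eta <= eta) by nra.
  nra. Qed.

Lemma ccont_inv : forall g z, ccont g z -> g z <> Czero -> ccont (fun w => Cinv (g w)) z.
Proof. intros g z Hg Hz e He.
  pose proof (Cnorm_pos _ Hz) as Hp. set (m := Cnorm (g z)) in *.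
  set (eta := Rmin (m/2) (e * m * m / 2)).
  assert (Heta : 0 < eta) by (apply Rmin_pos; [lra| apply Rdiv_lt_0_compat; [|lra]; apply Rmult_lt_0_compat; [apply Rmult_lt_0_compat|]; lra]).
  destruct (Hg eta Heta) as [d [Hd H]]. exists d; split; auto. intros w Hw. specialize (H w Hw).
  assert (eta <= m/2) by apply Rmin_l. assert (eta <= e*m*m/2) by apply Rmin_r.
  pose proof (Cnorm_sub_tri (g z) (g w)). rewrite Cnorm_sub_sym in H. fold m in H2.
  assert (Hgw : m / 2 < Cnorm (g w)) by lra.
  assert (gw0 : g w <> Czero) by (apply Cneq0_norm; lra).
  replace (Csub (Cinv (g w)) (Cinv (g z))) with (Cdiv (Csub (g z) (g w)) (Cmul (g w) (g z))) by (field; auto).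
  rewrite Cnorm_div by (apply Cmul_neq0; auto). rewrite Cnorm_mul. fold m.
  apply Rlt_le_trans with (eta / (m/2 * m)).
  - apply Rlt_le_trans with (eta / (Cnorm (g w) * m)).
    + unfold Rdiv; apply Rmult_lt_compat_r; auto. apply Rinv_0_lt_compat; nra.
    + unfold Rdiv; apply Rmult_le_compat_l; [lra|]. apply Rinv_le_contravar; nra.
  - apply Rle_trans with ((e*m*m/2)/(m/2*m)). unfold Rdiv; apply Rmult_le_compat_r; [|lra].
    left; apply Rinv_0_lt_compat; nra. right; field; lra. Qed.

Lemma cdif_cont : forall f z l, cdif f z l -> ccont f z.
Proof. intros f z l H.
  apply ccont_ext with (fun w => Cadd (f z) (Cmul (slope f z l w) (Csub w z))).
  intros; symmetry; apply slope_id.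
  apply ccont_add. apply ccont_const. apply ccont_mul. apply H.
  apply ccont_add. apply ccont_id. apply ccont_const. Qed.

Lemma cdif_intro : forall f z l (s : Cpx -> Cpx) r, 0 < r -> ccont s z -> s z = l ->
  (forall w, Cnorm (Csub w z) < r -> w <> z -> Csub (f w) (f z) = Cmul (s w) (Csub w z)) ->
  cdif f z l.
Proof. intros f z l s r Hr Hs Hsz H. unfold cdif.
  apply (ccont_local s _ z r Hr); auto.
  intros w Hw. destruct (Ceq_dec w z).
  - subst. rewrite slope_at; auto.
  - rewrite slope_ne by auto. rewrite H by auto. field. apply sub_neq0; auto. Qed.

Lemma cdif_local : forall f g z l r, 0 < r -> (forall w, Cnorm (Csub w z) < r -> f w = g w) ->
  cdif g z l -> cdif f z l.
Proof. intros f g z l r Hr Heq H. apply (cdif_intro f z l (slope g z l) r); auto.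
  apply slope_at. intros w Hw Hne. rewrite (Heq w Hw), (Heq z).
  rewrite (slope_id g z l w) at 1. ring.
  replace (Csub z z) with Czero by ring. rewrite Cnorm_C0; auto. Qed.

Lemma cdif_const : forall c z, cdif (fun _ => c) z Czero.
Proof. intros. apply (cdif_intro _ z Czero (fun _ => Czero) 1); auto. lra. apply ccont_const.
  intros; ring. Qed.

Lemma cdif_id : forall z, cdif (fun w => w) z Cone.
Proof. intros. apply (cdif_intro _ z Cone (fun _ => Cone) 1); auto. lra. apply ccont_const.
  intros; ring. Qed.

Lemma cdif_add : forall f g z lf lg, cdif f z lf -> cdif g z lg ->
  cdif (fun w => Cadd (f w) (g w)) z (Cadd lf lg).
Proof. intros. apply (cdif_intro _ z _ (fun w => Cadd (slope f z lf w) (slope g z lg w)) 1); auto. lra.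
  apply ccont_add; auto. rewrite !slope_at; auto.
  intros. rewrite (slope_id f z lf w) at 1. rewrite (slope_id g z lg w). ring. Qed.

Lemma cdif_mul : forall f g z lf lg, cdif f z lf -> cdif g z lg ->
  cdif (fun w => Cmul (f w) (g w)) z (Cadd (Cmul lf (g z)) (Cmul (f z) lg)).
Proof. intros. apply (cdif_intro _ z _ (fun w => Cadd (Cmul (slope f z lf w) (g w)) (Cmul (f z) (slope g z lg w))) 1); auto. lra.
  apply ccont_add; apply ccont_mul; auto. eapply cdif_cont; eauto. apply ccont_const.
  rewrite !slope_at; auto.
  intros. rewrite (slope_id f z lf w) at 1. rewrite (slope_id g z lg w). ring. Qed.

Lemma cdif_scale : forall c f z l, cdif f z l -> cdif (fun w => Cmul c (f w)) z (Cmul c l).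
Proof. intros. pose proof (cdif_mul (fun _ => c) f z Czero l (cdif_const c z) H). simpl in H0.
  replace (Cmul c l) with (Cadd (Cmul Czero (f z)) (Cmul c l)) by ring. auto. Qed.

Lemma cdif_sub : forall f g z lf lg, cdif f z lf -> cdif g z lg ->
  cdif (fun w => Csub (f w) (g w)) z (Csub lf lg).
Proof. intros. pose proof (cdif_add f (fun w => Cmul (Copp Cone) (g w)) z lf (Cmul (Copp Cone) lg) H (cdif_scale _ _ _ _ H0)).
  replace (Csub lf lg) with (Cadd lf (Cmul (Copp Cone) lg)) by ring.
  eapply cdif_local with (r := 1); [lra| |apply H1]. intros; simpl; ring. Qed.

Lemma ccont_nonzero : forall g z, ccont g z -> g z <> Czero ->
  exists r, 0 < r /\ forall w, Cnorm (Csub w z) < r -> g w <> Czero.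
Proof. intros g z H Hz. pose proof (Cnorm_pos _ Hz).
  destruct (H (Cnorm (g z))) as [d [Hd Hw]]; auto. exists d; split; auto.
  intros w Hwz E. specialize (Hw w Hwz). rewrite E in Hw.
  replace (Csub Czero (g z)) with (Copp (g z)) in Hw by ring. rewrite Cnorm_opp in Hw. lra. Qed.

Lemma cdif_inv : forall g z l, cdif g z l -> g z <> Czero ->
  cdif (fun w => Cinv (g w)) z (Copp (Cmul l (Cmul (Cinv (g z)) (Cinv (g z))))).
Proof. intros g z l H Hz. pose proof (cdif_cont _ _ _ H) as Hc.
  destruct (ccont_nonzero g z Hc Hz) as [r [Hr Hnz]].
  apply (cdif_intro _ z _ (fun w => Copp (Cmul (slope g z l w) (Cmul (Cinv (g w)) (Cinv (g z))))) r); auto.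
  - assert (ccont (fun w => Cmul (Copp Cone) (Cmul (slope g z l w) (Cmul (Cinv (g w)) (Cinv (g z))))) z).
    { apply ccont_mul. apply ccont_const. apply ccont_mul. apply H. apply ccont_mul. apply ccont_inv; auto. apply ccont_const. }
    eapply ccont_ext; [|apply H0]. intros; simpl; ring.
  - rewrite slope_at; auto.
  - intros w Hw Hne. specialize (Hnz w Hw).
    rewrite slope_ne by auto. field. repeat split; auto. apply sub_neq0; auto. Qed.

Lemma cdif_pow : forall f z l n, cdif f z l -> exists l', cdif (fun w => Cpow (f w) n) z l'.
Proof. intros f z l n H. induction n; simpl.
  - eexists; apply cdif_const.
  - destruct IHn as [l' H']. eexists. apply cdif_mul; eauto. Qed.

Lemma inD_open : forall z, inD z -> exists r, 0 < r /\ forall w, Cnorm (Csub w z) < r -> inD w.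
Proof. intros z Hz. unfold inD in *. exists (1 - Cnorm z); split; [lra|].
  intros w Hw. pose proof (Cnorm_tri (Csub w z) z). replace (Cadd (Csub w z) z) with w in H by ring. lra. Qed.

Lemma hc_to_cdif : forall f z l, inD z -> has_cderiv f z l -> cdif f z l.
Proof. intros f z l Hz H e He. destruct (inD_open z Hz) as [r [Hr Hin]].
  destruct (H e He) as [d [Hd Hh]]. exists (Rmin d r); split; [apply Rmin_pos; auto|].
  intros w Hw. rewrite slope_at. destruct (Ceq_dec w z).
  - subst. rewrite slope_at. replace (Csub l l) with Czero by ring. rewrite Cnorm_C0; auto.
  - rewrite slope_ne by auto. specialize (Hh (Csub w z) (sub_neq0 _ _ n)).
    replace (Cadd z (Csub w z)) with w in Hh by ring. apply Hh.
    eapply Rlt_le_trans; [apply Hw|apply Rmin_l]. apply Hin.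
    eapply Rlt_le_trans; [apply Hw|apply Rmin_r]. Qed.

Lemma cdif_to_hc : forall f z l, cdif f z l -> has_cderiv f z l.
Proof. intros f z l H e He. destruct (H e He) as [d [Hd Hh]]. exists d; split; auto.
  intros h Hh0 Hhd _. specialize (Hh (Cadd z h)).
  replace (Csub (Cadd z h) z) with h in Hh by ring. specialize (Hh Hhd).
  rewrite slope_at, slope_ne in Hh. replace (Csub (Cadd z h) z) with h in Hh by ring. auto.
  intro E. apply Hh0. replace h with (Csub (Cadd z h) z) by ring. rewrite E; ring. Qed.

Lemma holo_cdif : forall f z, holo f -> inD z -> exists l, cdif f z l.
Proof. intros f z H Hz. destruct (H z Hz) as [l Hl]. exists l. apply hc_to_cdif; auto. Qed.

Lemma holo_intro : forall f, (forall z, inD z -> exists l, cdif f z l) -> holo f.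
Proof. intros f H z Hz. destruct (H z Hz) as [l Hl]. exists l. apply cdif_to_hc; auto. Qed.

Lemma holo_cont : forall f z, holo f -> inD z -> ccont f z.
Proof. intros. destruct (holo_cdif f z H H0) as [l Hl]. eapply cdif_cont; eauto. Qed.

Definition inh_pick {X : Type} (H : inhabited X) : X :=
  proj1_sig (constructive_indefinite_description (fun _ : X => True)
    (match H with inhabits x => ex_intro _ x I end)).

Definition RI (f : R -> R) (a b : R) : R :=
  match excluded_middle_informative (inhabited (Riemann_integrable f a b)) with
  | left H => RiemannInt (inh_pick H)
  | right _ => 0 end.

Lemma RI_eq : forall f a b (pr : Riemann_integrable f a b), RI f a b = RiemannInt pr.
Proof. intros. unfold RI. destruct (excluded_middle_informative _).
  apply RiemannInt_P5. exfalso; apply n; constructor; auto. Qed.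

Definition rint (f : R -> R) a b := a <= b /\ forall t, a <= t <= b -> continuity_pt f t.

Definition rint_pr f a b (H : rint f a b) : Riemann_integrable f a b :=
  continuity_implies_RiemannInt (proj1 H) (proj2 H).

Lemma RI_lin : forall f g a b l, rint f a b -> rint g a b ->
  RI (fun t => f t + l * g t) a b = RI f a b + l * RI g a b.
Proof. intros. rewrite (RI_eq _ _ _ (rint_pr _ _ _ H)), (RI_eq _ _ _ (rint_pr _ _ _ H0)).
  rewrite (RI_eq _ _ _ (RiemannInt_P10 l (rint_pr _ _ _ H) (rint_pr _ _ _ H0))).
  apply RiemannInt_P13. Qed.

Lemma RI_const : forall c a b, RI (fun _ => c) a b = c * (b - a).
Proof. intros. change (fun _ : R => c) with (fct_cte c). rewrite (RI_eq _ _ _ (RiemannInt_P14 a b c)). apply RiemannInt_P15. Qed.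

Lemma rint_const : forall c a b, a <= b -> rint (fun _ => c) a b.
Proof. intros; split; auto; intros; apply continuity_pt_const; intros u v; auto. Qed.

Lemma RI_scal : forall f a b l, rint f a b -> RI (fun t => l * f t) a b = l * RI f a b.
Proof. intros. pose proof (RI_lin (fun _ => 0) f a b l (rint_const 0 a b (proj1 H)) H).
  simpl in H0. rewrite RI_const in H0. replace (fun t => l * f t) with (fun t => 0 + l * f t).
  rewrite H0; ring. apply functional_extensionality; intros; ring. Qed.

Lemma RI_chasles : forall f a b c, a <= b -> b <= c -> rint f a c -> RI f a b + RI f b c = RI f a c.
Proof. intros. destruct H1.
  assert (rint f a b) by (split; auto; intros; apply H2; lra).
  assert (rint f b c) by (split; auto; intros; apply H2; lra).
  rewrite (RI_eq _ _ _ (rint_pr _ _ _ H3)), (RI_eq _ _ _ (rint_pr _ _ _ H4)),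
    (RI_eq _ _ _ (rint_pr _ _ _ (conj H1 H2))). apply RiemannInt_P26. Qed.

Lemma RI_ext : forall f g a b, rint f a b -> rint g a b -> (forall t, a <= t <= b -> f t = g t) ->
  RI f a b = RI g a b.
Proof. intros. rewrite (RI_eq _ _ _ (rint_pr _ _ _ H)), (RI_eq _ _ _ (rint_pr _ _ _ H0)).
  apply RiemannInt_P18. apply H. intros; apply H1; lra. Qed.

Lemma RI_le : forall f g a b, rint f a b -> rint g a b -> (forall t, a <= t <= b -> f t <= g t) ->
  RI f a b <= RI g a b.
Proof. intros. rewrite (RI_eq _ _ _ (rint_pr _ _ _ H)), (RI_eq _ _ _ (rint_pr _ _ _ H0)).
  apply RiemannInt_P19. apply H. intros; apply H1; lra. Qed.

Lemma Rabs_le_inv' : forall x M, Rabs x <= M -> -M <= x <= M.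
Proof. intros x M. unfold Rabs; destruct (Rcase_abs x); lra. Qed.

Lemma RI_bound : forall f a b M, rint f a b -> (forall t, a <= t <= b -> Rabs (f t) <= M) ->
  Rabs (RI f a b) <= M * (b - a).
Proof. intros. pose proof (proj1 H).
  assert (RI f a b <= M * (b-a)). { rewrite <- RI_const. apply RI_le; auto. apply rint_const; auto.
    intros. specialize (H0 t H2). apply Rabs_le_inv' in H0. lra. }
  assert (-M*(b-a) <= RI f a b). { rewrite <- RI_const. apply RI_le; auto. apply rint_const; auto.
    intros. specialize (H0 t H3). apply Rabs_le_inv' in H0. lra. }
  apply Rabs_le. lra. Qed.

Lemma RI_lower : forall f a b m, rint f a b -> (forall t, a <= t <= b -> m <= f t) -> m * (b - a) <= RI f a b.
Proof. intros. rewrite <- RI_const. apply RI_le; auto. apply rint_const; apply H. Qed.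

Definition ccont1 (g : R -> Cpx) (t : R) : Prop :=
  forall e, 0 < e -> exists d, 0 < d /\ forall s, Rabs (s - t) < d -> Cnorm (Csub (g s) (g t)) < e.

Lemma ccont1_fst : forall g t, ccont1 g t -> continuity_pt (fun s => fst (g s)) t.
Proof. intros g t H. unfold continuity_pt, continue_in, limit1_in, limit_in; simpl; unfold R_dist.
  intros e He. destruct (H e He) as [d [Hd Hs]]. exists d; split; auto. intros s [_ Hst].
  eapply Rle_lt_trans; [|apply (Hs s Hst)]. pose proof (Cnorm_fst (Csub (g s) (g t))).
  unfold Csub, Cadd, Copp in H0; simpl in H0. auto. Qed.

Lemma ccont1_snd : forall g t, ccont1 g t -> continuity_pt (fun s => snd (g s)) t.
Proof. intros g t H. unfold continuity_pt, continue_in, limit1_in, limit_in; simpl; unfold R_dist.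
  intros e He. destruct (H e He) as [d [Hd Hs]]. exists d; split; auto. intros s [_ Hst].
  eapply Rle_lt_trans; [|apply (Hs s Hst)]. pose proof (Cnorm_snd (Csub (g s) (g t))).
  unfold Csub, Cadd, Copp in H0; simpl in H0. auto. Qed.

Definition cint1 (g : R -> Cpx) a b := a <= b /\ forall t, a <= t <= b -> ccont1 g t.

Lemma Cadd_pair : forall a b c d, Cadd (a,b) (c,d) = (a+c, b+d).
Proof. reflexivity. Qed.
Lemma Cmul_pair : forall a b c d, Cmul (a,b) (c,d) = (a*c-b*d, a*d+b*c).
Proof. reflexivity. Qed.

Definition CI (g : R -> Cpx) (a b : R) : Cpx :=
  (RI (fun t => fst (g t)) a b, RI (fun t => snd (g t)) a b).

Lemma cint1_fst : forall g a b, cint1 g a b -> rint (fun t => fst (g t)) a b.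
Proof. intros g a b [H1 H2]; split; auto; intros; apply ccont1_fst; auto. Qed.
Lemma cint1_snd : forall g a b, cint1 g a b -> rint (fun t => snd (g t)) a b.
Proof. intros g a b [H1 H2]; split; auto; intros; apply ccont1_snd; auto. Qed.

Lemma CI_add : forall g1 g2 a b, cint1 g1 a b -> cint1 g2 a b ->
  CI (fun t => Cadd (g1 t) (g2 t)) a b = Cadd (CI g1 a b) (CI g2 a b).
Proof. intros. unfold CI. rewrite Cadd_pair. apply Cpx_eq.
  - replace (fun t => fst (Cadd (g1 t) (g2 t))) with (fun t => fst (g1 t) + 1 * fst (g2 t)).
    rewrite (RI_lin (fun t => fst (g1 t)) (fun t => fst (g2 t))); [ring| apply cint1_fst; auto ..].
    apply functional_extensionality; intros; unfold Cadd; simpl; ring.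
  - replace (fun t => snd (Cadd (g1 t) (g2 t))) with (fun t => snd (g1 t) + 1 * snd (g2 t)).
    rewrite (RI_lin (fun t => snd (g1 t)) (fun t => snd (g2 t))); [ring| apply cint1_snd; auto ..].
    apply functional_extensionality; intros; unfold Cadd; simpl; ring. Qed.

Lemma CI_scal : forall c g a b, cint1 g a b ->
  CI (fun t => Cmul c (g t)) a b = Cmul c (CI g a b).
Proof. intros. unfold CI. destruct c as [c1 c2]. rewrite Cmul_pair. apply Cpx_eq.
  - replace (fun t => fst (Cmul (c1,c2) (g t))) with (fun t => c1 * fst (g t) + (- c2) * snd (g t)).
    rewrite (RI_lin (fun t => c1 * fst (g t)) (fun t => snd (g t))), (RI_scal (fun t => fst (g t))); [ring| apply cint1_fst; auto| | apply cint1_snd; auto].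
    split; [apply H|]. intros; apply continuity_pt_scal. apply ccont1_fst; apply H; auto.
    apply functional_extensionality; intros; unfold Cmul; simpl; ring.
  - replace (fun t => snd (Cmul (c1,c2) (g t))) with (fun t => c1 * snd (g t) + (c2) * fst (g t)).
    rewrite (RI_lin (fun t => c1 * snd (g t)) (fun t => fst (g t))), (RI_scal (fun t => snd (g t))); [ring| apply cint1_snd; auto| | apply cint1_fst; auto].
    split; [apply H|]. intros; apply continuity_pt_scal. apply ccont1_snd; apply H; auto.
    apply functional_extensionality; intros; unfold Cmul; simpl; ring. Qed.

Lemma CI_chasles : forall g a b c, a <= b -> b <= c -> cint1 g a c ->
  Cadd (CI g a b) (CI g b c) = CI g a c.
Proof. intros. unfold CI, Cadd; simpl. apply Cpx_eq; apply RI_chasles; auto.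
  apply cint1_fst; auto. apply cint1_snd; auto. Qed.

Lemma CI_const : forall c a b, CI (fun _ => c) a b = Cmul c ((b - a), 0).
Proof. intros. unfold CI, Cmul; simpl. rewrite !RI_const. apply Cpx_eq; ring. Qed.

Lemma CI_ext : forall g1 g2 a b, cint1 g1 a b -> cint1 g2 a b ->
  (forall t, a <= t <= b -> g1 t = g2 t) -> CI g1 a b = CI g2 a b.
Proof. intros. unfold CI. apply Cpx_eq; apply RI_ext;
  try (apply cint1_fst; auto); try (apply cint1_snd; auto); intros; rewrite H1; auto. Qed.

Lemma CI_bound : forall g a b M, cint1 g a b -> (forall t, a <= t <= b -> Cnorm (g t) <= M) ->
  Cnorm (CI g a b) <= 2 * M * (b - a).
Proof. intros. eapply Rle_trans; [apply Cnorm_le_abs|]. unfold CI; simpl.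
  assert (Rabs (RI (fun t => fst (g t)) a b) <= M * (b - a)).
  { apply RI_bound. apply cint1_fst; auto. intros. eapply Rle_trans; [apply Cnorm_fst| auto]. }
  assert (Rabs (RI (fun t => snd (g t)) a b) <= M * (b - a)).
  { apply RI_bound. apply cint1_snd; auto. intros. eapply Rle_trans; [apply Cnorm_snd| auto]. }
  lra. Qed.

Definition Ci : Cpx := (0, 1).

Definition cint (phi : Cpx -> Cpx) (x0 x1 y0 y1 : R) : Cpx :=
  Cadd (Csub (CI (fun t => phi (t, y0)) x0 x1) (CI (fun t => phi (t, y1)) x0 x1))
       (Cmul Ci (Csub (CI (fun t => phi (x1, t)) y0 y1) (CI (fun t => phi (x0, t)) y0 y1))).

Definition bcont (phi : Cpx -> Cpx) x0 x1 y0 y1 : Prop :=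
  x0 <= x1 /\ y0 <= y1 /\
  (forall t, x0 <= t <= x1 -> ccont phi (t, y0) /\ ccont phi (t, y1)) /\
  (forall t, y0 <= t <= y1 -> ccont phi (x0, t) /\ ccont phi (x1, t)).

Definition rcont (phi : Cpx -> Cpx) x0 x1 y0 y1 : Prop :=
  x0 <= x1 /\ y0 <= y1 /\ forall x y, x0 <= x <= x1 -> y0 <= y <= y1 -> ccont phi (x, y).

Lemma rcont_bcont : forall phi x0 x1 y0 y1, rcont phi x0 x1 y0 y1 -> bcont phi x0 x1 y0 y1.
Proof. intros phi x0 x1 y0 y1 [H1 [H2 H3]]. repeat split; auto; intros; apply H3; lra. Qed.

Lemma ccont_hline : forall phi t y, ccont phi (t, y) -> ccont1 (fun s => phi (s, y)) t.
Proof. intros phi t y H e He. destruct (H e He) as [d [Hd Hs]]. exists d; split; auto.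
  intros s Hst. apply Hs. replace (Csub (s,y) (t,y)) with (s - t, 0).
  rewrite Cnorm_real; auto. unfold Csub, Cadd, Copp; simpl; apply Cpx_eq; ring. Qed.

Lemma ccont_vline : forall phi t x, ccont phi (x, t) -> ccont1 (fun s => phi (x, s)) t.
Proof. intros phi t x H e He. destruct (H e He) as [d [Hd Hs]]. exists d; split; auto.
  intros s Hst. apply Hs. replace (Csub (x,s) (x,t)) with (0, s - t).
  rewrite Cnorm_imag; auto. unfold Csub, Cadd, Copp; simpl; apply Cpx_eq; ring. Qed.

Section Edges.
Variables (phi : Cpx -> Cpx) (x0 x1 y0 y1 : R).
Hypothesis H : bcont phi x0 x1 y0 y1.
Lemma e_bot : cint1 (fun t => phi (t, y0)) x0 x1.
Proof. destruct H as [? [? [? ?]]]. split; auto; intros; apply ccont_hline; apply H2; auto. Qed.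
Lemma e_top : cint1 (fun t => phi (t, y1)) x0 x1.
Proof. destruct H as [? [? [? ?]]]. split; auto; intros; apply ccont_hline; apply H2; auto. Qed.
Lemma e_left : cint1 (fun t => phi (x0, t)) y0 y1.
Proof. destruct H as [? [? [? ?]]]. split; auto; intros; apply ccont_vline; apply H3; auto. Qed.
Lemma e_right : cint1 (fun t => phi (x1, t)) y0 y1.
Proof. destruct H as [? [? [? ?]]]. split; auto; intros; apply ccont_vline; apply H3; auto. Qed.
End Edges.

Ltac edge1 := match goal with
  | H : bcont _ _ _ _ _ |- cint1 _ _ _ => first [exact (e_bot _ _ _ _ _ H) | exact (e_top _ _ _ _ _ H)
       | exact (e_left _ _ _ _ _ H) | exact (e_right _ _ _ _ _ H)]
  end.
Ltac edges := first [ring | edge1].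

Lemma bcont_add : forall f g x0 x1 y0 y1, bcont f x0 x1 y0 y1 -> bcont g x0 x1 y0 y1 ->
  bcont (fun w => Cadd (f w) (g w)) x0 x1 y0 y1.
Proof. intros f g x0 x1 y0 y1 [A [B [C D]]] [_ [_ [E F]]]. repeat split; auto; intros;
  apply ccont_add; first [apply C | apply D | apply E | apply F]; auto. Qed.

Lemma bcont_scal : forall c f x0 x1 y0 y1, bcont f x0 x1 y0 y1 ->
  bcont (fun w => Cmul c (f w)) x0 x1 y0 y1.
Proof. intros c f x0 x1 y0 y1 [A [B [C D]]]. repeat split; auto; intros;
  apply ccont_mul; try apply ccont_const; first [apply C | apply D]; auto. Qed.

Lemma cint_add : forall f g x0 x1 y0 y1, bcont f x0 x1 y0 y1 -> bcont g x0 x1 y0 y1 ->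
  cint (fun w => Cadd (f w) (g w)) x0 x1 y0 y1 = Cadd (cint f x0 x1 y0 y1) (cint g x0 x1 y0 y1).
Proof. intros. unfold cint.
  rewrite (CI_add (fun t => f (t,y0)) (fun t => g (t,y0))), (CI_add (fun t => f (t,y1)) (fun t => g (t,y1))),
    (CI_add (fun t => f (x1,t)) (fun t => g (x1,t))), (CI_add (fun t => f (x0,t)) (fun t => g (x0,t)));
  edges. Qed.

Lemma cint_scal : forall c f x0 x1 y0 y1, bcont f x0 x1 y0 y1 ->
  cint (fun w => Cmul c (f w)) x0 x1 y0 y1 = Cmul c (cint f x0 x1 y0 y1).
Proof. intros. unfold cint.
  rewrite (CI_scal c (fun t => f (t,y0))), (CI_scal c (fun t => f (t,y1))),
    (CI_scal c (fun t => f (x1,t))), (CI_scal c (fun t => f (x0,t)));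
  edges. Qed.

Lemma cint_sub : forall f g x0 x1 y0 y1, bcont f x0 x1 y0 y1 -> bcont g x0 x1 y0 y1 ->
  cint (fun w => Csub (f w) (g w)) x0 x1 y0 y1 = Csub (cint f x0 x1 y0 y1) (cint g x0 x1 y0 y1).
Proof. intros. replace (fun w => Csub (f w) (g w)) with (fun w => Cadd (f w) (Cmul (Copp Cone) (g w))).
  rewrite cint_add, cint_scal; auto. ring. apply bcont_scal; auto.
  apply functional_extensionality; intros; ring. Qed.

Lemma cint_ext : forall f g x0 x1 y0 y1, bcont f x0 x1 y0 y1 -> bcont g x0 x1 y0 y1 ->
  (forall t, x0 <= t <= x1 -> f (t,y0) = g (t,y0) /\ f (t,y1) = g (t,y1)) ->
  (forall t, y0 <= t <= y1 -> f (x0,t) = g (x0,t) /\ f (x1,t) = g (x1,t)) ->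
  cint f x0 x1 y0 y1 = cint g x0 x1 y0 y1.
Proof. intros. unfold cint.
  rewrite (CI_ext (fun t => f (t,y0)) (fun t => g (t,y0))), (CI_ext (fun t => f (t,y1)) (fun t => g (t,y1))),
    (CI_ext (fun t => f (x1,t)) (fun t => g (x1,t))), (CI_ext (fun t => f (x0,t)) (fun t => g (x0,t)));
  first [reflexivity | edge1 | intros; apply H1; auto | intros; apply H2; auto]. Qed.

Lemma Cnorm_Ci : forall z, Cnorm (Cmul Ci z) = Cnorm z.
Proof. intros. rewrite Cnorm_mul. unfold Ci. rewrite Cnorm_imag, Rabs_R1; ring. Qed.

Lemma Cnorm_sub_le : forall z w, Cnorm (Csub z w) <= Cnorm z + Cnorm w.
Proof. intros. unfold Csub. eapply Rle_trans; [apply Cnorm_tri|]. rewrite Cnorm_opp; lra. Qed.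

Lemma cint_bound : forall f x0 x1 y0 y1 M, bcont f x0 x1 y0 y1 ->
  (forall t, x0 <= t <= x1 -> Cnorm (f (t,y0)) <= M /\ Cnorm (f (t,y1)) <= M) ->
  (forall t, y0 <= t <= y1 -> Cnorm (f (x0,t)) <= M /\ Cnorm (f (x1,t)) <= M) ->
  Cnorm (cint f x0 x1 y0 y1) <= 4 * M * ((x1 - x0) + (y1 - y0)).
Proof. intros. unfold cint.
  pose proof (CI_bound (fun t => f (t,y0)) x0 x1 M (e_bot _ _ _ _ _ H) (fun t Ht => proj1 (H0 t Ht))).
  pose proof (CI_bound (fun t => f (t,y1)) x0 x1 M (e_top _ _ _ _ _ H) (fun t Ht => proj2 (H0 t Ht))).
  pose proof (CI_bound (fun t => f (x0,t)) y0 y1 M (e_left _ _ _ _ _ H) (fun t Ht => proj1 (H1 t Ht))).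
  pose proof (CI_bound (fun t => f (x1,t)) y0 y1 M (e_right _ _ _ _ _ H) (fun t Ht => proj2 (H1 t Ht))).
  eapply Rle_trans; [apply Cnorm_tri|]. rewrite Cnorm_Ci.
  pose proof (Cnorm_sub_le (CI (fun t => f (t, y0)) x0 x1) (CI (fun t => f (t, y1)) x0 x1)).
  pose proof (Cnorm_sub_le (CI (fun t => f (x1, t)) y0 y1) (CI (fun t => f (x0, t)) y0 y1)).
  lra. Qed.

Lemma vsplit : forall f x0 c x1 y0 y1, x0 <= c <= x1 -> rcont f x0 x1 y0 y1 ->
  cint f x0 x1 y0 y1 = Cadd (cint f x0 c y0 y1) (cint f c x1 y0 y1).
Proof. intros f x0 c x1 y0 y1 Hc Hr. pose proof (rcont_bcont _ _ _ _ _ Hr) as Hb.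
  unfold cint.
  rewrite <- (CI_chasles (fun t => f (t,y0)) x0 c x1), <- (CI_chasles (fun t => f (t,y1)) x0 c x1);
  try lra; try edge1. ring. Qed.

Lemma hsplit : forall f x0 x1 y0 c y1, y0 <= c <= y1 -> rcont f x0 x1 y0 y1 ->
  cint f x0 x1 y0 y1 = Cadd (cint f x0 x1 y0 c) (cint f x0 x1 c y1).
Proof. intros f x0 x1 y0 c y1 Hc Hr. pose proof (rcont_bcont _ _ _ _ _ Hr) as Hb.
  unfold cint.
  rewrite <- (CI_chasles (fun t => f (x0,t)) y0 c y1), <- (CI_chasles (fun t => f (x1,t)) y0 c y1);
  try lra; try edge1. ring. Qed.

Lemma cint_affine : forall al be x0 x1 y0 y1, x0 <= x1 -> y0 <= y1 ->
  cint (fun w => Cadd al (Cmul be w)) x0 x1 y0 y1 = Czero.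
Proof. intros. 
  assert (Hc : forall w, ccont (fun w => Cadd al (Cmul be w)) w).
  { intros; apply ccont_add; [apply ccont_const| apply ccont_mul; [apply ccont_const|apply ccont_id]]. }
  assert (Hb : bcont (fun w => Cadd al (Cmul be w)) x0 x1 y0 y1) by (repeat split; auto).
  assert (Hk : forall k a b, a <= b -> cint1 (fun _ => k) a b).
  { intros; split; auto; intros. intros e He; exists 1; split; [lra|]; intros.
    replace (Csub k k) with Czero by ring. rewrite Cnorm_C0; auto. }
  unfold cint.
  replace (fun t => Cadd al (Cmul be (t, y0))) with (fun t => Cadd (Cadd al (Cmul be (t, y1))) (Cmul be (0, y0 - y1))).
  2:{ apply functional_extensionality; intros. destruct be. unfold Cadd, Cmul; simpl; apply Cpx_eq; ring. }
  replace (fun t => Cadd al (Cmul be (x1, t))) with (fun t => Cadd (Cadd al (Cmul be (x0, t))) (Cmul be (x1 - x0, 0))).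
  2:{ apply functional_extensionality; intros. destruct be. unfold Cadd, Cmul; simpl; apply Cpx_eq; ring. }
  rewrite (CI_add (fun t => Cadd al (Cmul be (t, y1)))), (CI_add (fun t => Cadd al (Cmul be (x0, t)))); try edge1; try apply Hk; auto.
  rewrite !CI_const. destruct be. unfold Ci, Cadd, Csub, Cmul, Copp, Defs.C0; simpl. apply Cpx_eq; ring.
Qed.

Record rect := Rect { rx0 : R; rx1 : R; ry0 : R; ry1 : R }.

Lemma rcont_sub : forall f x0 x1 y0 y1 a0 a1 b0 b1, rcont f x0 x1 y0 y1 ->
  x0 <= a0 -> a0 <= a1 -> a1 <= x1 -> y0 <= b0 -> b0 <= b1 -> b1 <= y1 -> rcont f a0 a1 b0 b1.
Proof. intros f x0 x1 y0 y1 a0 a1 b0 b1 [_ [_ H]]; intros. repeat split; auto; intros; apply H; lra. Qed.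

Lemma ccont_sub : forall f g z, ccont f z -> ccont g z -> ccont (fun w => Csub (f w) (g w)) z.
Proof. intros. apply ccont_ext with (fun w => Cadd (f w) (Cmul (Copp Cone) (g w))).
  intros; ring. apply ccont_add; auto. apply ccont_mul; auto. apply ccont_const. Qed.

Lemma bcont_sub : forall f g x0 x1 y0 y1, bcont f x0 x1 y0 y1 -> bcont g x0 x1 y0 y1 ->
  bcont (fun w => Csub (f w) (g w)) x0 x1 y0 y1.
Proof. intros f g x0 x1 y0 y1 [A [B [C D]]] [_ [_ [E F]]]. repeat split; auto; intros;
  apply ccont_sub; first [apply C | apply D | apply E | apply F]; auto. Qed.

Section Goursat.
Variable phi : Cpx -> Cpx.

Definition eta (Q : rect) := cint phi (rx0 Q) (rx1 Q) (ry0 Q) (ry1 Q).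

Definition mx Q := (rx0 Q + rx1 Q) / 2.
Definition my Q := (ry0 Q + ry1 Q) / 2.
Definition q1 Q := Rect (rx0 Q) (mx Q) (ry0 Q) (my Q).
Definition q2 Q := Rect (mx Q) (rx1 Q) (ry0 Q) (my Q).
Definition q3 Q := Rect (rx0 Q) (mx Q) (my Q) (ry1 Q).
Definition q4 Q := Rect (mx Q) (rx1 Q) (my Q) (ry1 Q).

Lemma eta_split : forall Q, rcont phi (rx0 Q) (rx1 Q) (ry0 Q) (ry1 Q) ->
  eta Q = Cadd (Cadd (eta (q1 Q)) (eta (q2 Q))) (Cadd (eta (q3 Q)) (eta (q4 Q))).
Proof. intros [a0 a1 b0 b1] H; unfold eta, q1, q2, q3, q4, mx, my; simpl in *.
  pose proof H as H'; destruct H' as [Ha [Hb _]].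
  rewrite (vsplit phi a0 ((a0+a1)/2) a1 b0 b1); [|lra|auto].
  rewrite (hsplit phi a0 ((a0+a1)/2) b0 ((b0+b1)/2) b1).
  rewrite (hsplit phi ((a0+a1)/2) a1 b0 ((b0+b1)/2) b1). ring.
  lra. eapply rcont_sub; eauto; lra. lra. eapply rcont_sub; eauto; lra. Qed.

Definition quad (Q : rect) : rect :=
  if Rle_dec (Cnorm (eta Q) / 4) (Cnorm (eta (q1 Q))) then q1 Q else
  if Rle_dec (Cnorm (eta Q) / 4) (Cnorm (eta (q2 Q))) then q2 Q else
  if Rle_dec (Cnorm (eta Q) / 4) (Cnorm (eta (q3 Q))) then q3 Q else q4 Q.

Lemma quad_prop : forall Q, rx0 Q <= rx1 Q -> ry0 Q <= ry1 Q ->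
  rcont phi (rx0 Q) (rx1 Q) (ry0 Q) (ry1 Q) ->
  Cnorm (eta Q) / 4 <= Cnorm (eta (quad Q)) /\
  rx0 Q <= rx0 (quad Q) /\ rx1 (quad Q) <= rx1 Q /\ rx1 (quad Q) - rx0 (quad Q) = (rx1 Q - rx0 Q) / 2 /\
  ry0 Q <= ry0 (quad Q) /\ ry1 (quad Q) <= ry1 Q /\ ry1 (quad Q) - ry0 (quad Q) = (ry1 Q - ry0 Q) / 2.
Proof. intros Q Hx Hy H. pose proof (eta_split Q H) as E.
  unfold quad. destruct (Rle_dec _ _).
  { unfold q1, mx, my; simpl. repeat split; auto; lra. }
  destruct (Rle_dec _ _).
  { unfold q2, mx, my; simpl. repeat split; auto; lra. }
  destruct (Rle_dec _ _).
  { unfold q3, mx, my; simpl. repeat split; auto; lra. }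
  split.
  - destruct (Rle_dec (Cnorm (eta Q) / 4) (Cnorm (eta (q4 Q)))); auto. exfalso.
    assert (Cnorm (eta Q) <= Cnorm (eta (q1 Q)) + Cnorm (eta (q2 Q)) + Cnorm (eta (q3 Q)) + Cnorm (eta (q4 Q))).
    { rewrite E. eapply Rle_trans; [apply Cnorm_tri|].
      pose proof (Cnorm_tri (eta (q1 Q)) (eta (q2 Q))). pose proof (Cnorm_tri (eta (q3 Q)) (eta (q4 Q))). lra. }
    lra.
  - unfold q4, mx, my; simpl. repeat split; auto; lra.
Qed.

Variables x0 x1 y0 y1 : R.
Hypothesis Hx : x0 < x1.
Hypothesis Hy : y0 < y1.
Hypothesis Hd : forall x y, x0 <= x <= x1 -> y0 <= y <= y1 -> exists l, cdif phi (x, y) l.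

Lemma Hrc : rcont phi x0 x1 y0 y1.
Proof. repeat split; try lra. intros. destruct (Hd x y H H0) as [l Hl]. eapply cdif_cont; eauto. Qed.

Definition Q0 := Rect x0 x1 y0 y1.
Fixpoint Qn (n : nat) : rect := match n with O => Q0 | S k => quad (Qn k) end.

Lemma Qn_inv : forall n,
  x0 <= rx0 (Qn n) /\ rx1 (Qn n) <= x1 /\ rx1 (Qn n) - rx0 (Qn n) = (x1 - x0) * (/2)^n /\
  y0 <= ry0 (Qn n) /\ ry1 (Qn n) <= y1 /\ ry1 (Qn n) - ry0 (Qn n) = (y1 - y0) * (/2)^n /\
  Cnorm (eta Q0) * (/4)^n <= Cnorm (eta (Qn n)).
Proof. induction n; simpl.
  - repeat split; try lra.
  - destruct IHn as [A [B [C [D [E [F G]]]]]].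
    assert (0 < (/2)^n) by (apply pow_lt; lra).
    assert (rx0 (Qn n) <= rx1 (Qn n)) by nra. assert (ry0 (Qn n) <= ry1 (Qn n)) by nra.
    destruct (quad_prop (Qn n)) as [P1 [P2 [P3 [P4 [P5 [P6 P7]]]]]]; auto.
    all: try (eapply rcont_sub; [apply Hrc| ..]; auto; fail).
    repeat split; try lra; try (rewrite P4, C; field); try (rewrite P7, F; field).
    all: try (replace (Cnorm (eta Q0) * (/ 4 * (/ 4) ^ n)) with ((Cnorm (eta Q0) * (/4)^n) / 4) by field; lra).
Qed.

Lemma Qn_step : forall n, rx0 (Qn n) <= rx0 (Qn (S n)) /\ rx1 (Qn (S n)) <= rx1 (Qn n) /\
  ry0 (Qn n) <= ry0 (Qn (S n)) /\ ry1 (Qn (S n)) <= ry1 (Qn n).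
Proof. intros. destruct (Qn_inv n) as [A [B [C [D [E [F G]]]]]].
    assert (0 < (/2)^n) by (apply pow_lt; lra).
    assert (rx0 (Qn n) <= rx1 (Qn n)) by nra. assert (ry0 (Qn n) <= ry1 (Qn n)) by nra.
    destruct (quad_prop (Qn n)) as [P1 [P2 [P3 [P4 [P5 [P6 P7]]]]]]; auto.
    all: try (eapply rcont_sub; [apply Hrc| ..]; auto; fail).
    all: try (simpl; repeat split; lra). Qed.

Lemma Qn_mono : forall n k, (n <= k)%nat -> rx0 (Qn n) <= rx0 (Qn k) /\ rx1 (Qn k) <= rx1 (Qn n) /\
  ry0 (Qn n) <= ry0 (Qn k) /\ ry1 (Qn k) <= ry1 (Qn n).
Proof. intros n k H. induction H. repeat split; lra.
  destruct (Qn_step m). lra. Qed.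

Lemma Qn_wf : forall n, rx0 (Qn n) <= rx1 (Qn n) /\ ry0 (Qn n) <= ry1 (Qn n).
Proof. intros. destruct (Qn_inv n) as [A [B [C [D [E [F G]]]]]].
  assert (0 < (/2)^n) by (apply pow_lt; lra). split; nra. Qed.

Lemma limit_pt : forall (lo hi : nat -> R), (forall n, lo n <= lo (S n)) ->
  (forall n k, (n <= k)%nat -> hi k <= hi n) -> (forall n, lo n <= hi n) ->
  exists p, forall n, lo n <= p <= hi n.
Proof. intros lo hi Hg Hm Hw.
  assert (Hub : has_ub lo). { exists (hi O). intros x [i ->]. 
    pose proof (Hm O i (Nat.le_0_l i)). pose proof (Hw i). lra. }
  destruct (growing_cv lo Hg Hub) as [p Hp]. exists p. intros n. split.
  - apply growing_ineq; auto.
  - destruct (Rle_dec p (hi n)); auto. exfalso.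
    destruct (Hp (p - hi n)) as [N HN]. lra.
    specialize (HN (max N n) (Nat.le_max_l N n)). unfold Rdist in HN.
    pose proof (Hm n (max N n) (Nat.le_max_r N n)). pose proof (Hw (max N n)).
    apply Rabs_def2 in HN. lra. Qed.

Theorem goursat : cint phi x0 x1 y0 y1 = Czero.
Proof.
  destruct (Ceq_dec (cint phi x0 x1 y0 y1) Czero) as [E|Hne]; auto. exfalso.
  set (c := Cnorm (cint phi x0 x1 y0 y1)).
  assert (Hc : 0 < c) by (apply Cnorm_pos; auto).
  destruct (limit_pt (fun n => rx0 (Qn n)) (fun n => rx1 (Qn n))) as [px Hpx].
  { intros; apply Qn_step. } { intros; apply Qn_mono; auto. } { intros; apply Qn_wf. }
  destruct (limit_pt (fun n => ry0 (Qn n)) (fun n => ry1 (Qn n))) as [py Hpy].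
  { intros; apply Qn_step. } { intros; apply Qn_mono; auto. } { intros; apply Qn_wf. }
  simpl in Hpx, Hpy.
  assert (Hp0 : x0 <= px <= x1 /\ y0 <= py <= y1).
  { specialize (Hpx O); specialize (Hpy O); simpl in *; lra. }
  destruct (Hd px py (proj1 Hp0) (proj2 Hp0)) as [l Hl].
  set (p := (px, py)).
  set (K := (x1 - x0) + (y1 - y0)).
  assert (HK : 0 < K) by (unfold K; lra).
  set (ep := c / (8 * K * K)).
  assert (Hep : 0 < ep) by (unfold ep; apply Rdiv_lt_0_compat; [lra| nra]).
  destruct (Hl ep Hep) as [d [Hdp Hsl]].
  destruct (pow_lt_1_zero (/2) ltac:(rewrite Rabs_right; lra) (d / K) ltac:(apply Rdiv_lt_0_compat; lra)) as [N HN].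
  specialize (HN N (le_n N)). rewrite Rabs_right in HN by (left; apply pow_lt; lra).
  set (h := (/2)^N) in *.
  assert (Hh : 0 < h) by (apply pow_lt; lra).
  destruct (Qn_inv N) as [A [B [C [D [E [F G]]]]]].
  fold h in C, F. set (Q := Qn N) in *. specialize (Hpx N); specialize (Hpy N). fold Q in Hpx, Hpy.
  set (aff := fun w => Cadd (Csub (phi p) (Cmul l p)) (Cmul l w)).
  assert (Hrq : rcont phi (rx0 Q) (rx1 Q) (ry0 Q) (ry1 Q)).
  { eapply rcont_sub; [apply Hrc|..]; lra. }
  assert (Hba : bcont aff (rx0 Q) (rx1 Q) (ry0 Q) (ry1 Q)).
  { assert (forall w, ccont aff w). { intros; unfold aff; apply ccont_add; [apply ccont_const|];
      apply ccont_mul; [apply ccont_const| apply ccont_id]. }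
    repeat split; auto; lra. }
  assert (Eq : eta Q = cint (fun w => Csub (phi w) (aff w)) (rx0 Q) (rx1 Q) (ry0 Q) (ry1 Q)).
  { rewrite cint_sub; auto. unfold aff. rewrite cint_affine by lra. unfold eta; ring.
    apply rcont_bcont; auto. }
  assert (Hpt : forall w, rx0 Q <= fst w <= rx1 Q -> ry0 Q <= snd w <= ry1 Q ->
     Cnorm (Csub (phi w) (aff w)) <= ep * (K * h)).
  { intros [wx wy] Hwx Hwy; simpl in *.
    assert (Hwp : Cnorm (Csub (wx, wy) p) <= K * h).
    { eapply Rle_trans; [apply Cnorm_le_abs|]. unfold p, Csub, Cadd, Copp; simpl.
      assert (Rabs (wx + - px) <= (x1 - x0) * h) by (apply Rabs_le; lra).
      assert (Rabs (wy + - py) <= (y1 - y0) * h) by (apply Rabs_le; lra).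
      unfold K; lra. }
    assert (Hwd : Cnorm (Csub (wx, wy) p) < d).
    { eapply Rle_lt_trans; [apply Hwp|]. replace d with (K * (d / K)) by (field; lra).
      apply Rmult_lt_compat_l; auto. }
    specialize (Hsl (wx,wy) Hwd). rewrite slope_at in Hsl.
    replace (Csub (phi (wx, wy)) (aff (wx, wy))) with (Cmul (Csub (slope phi p l (wx,wy)) l) (Csub (wx,wy) p)).
    2:{ unfold aff. rewrite (slope_id phi p l (wx,wy)). ring. }
    rewrite Cnorm_mul. unfold p in *. apply Rmult_le_compat; try apply Cnorm_ge0; lra. }
  assert (Hbd := cint_bound (fun w => Csub (phi w) (aff w)) (rx0 Q) (rx1 Q) (ry0 Q) (ry1 Q) (ep * (K * h))).
  rewrite <- Eq in Hbd.
  assert (Cnorm (eta Q) <= 4 * (ep * (K * h)) * (rx1 Q - rx0 Q + (ry1 Q - ry0 Q))).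
  { apply Hbd.
    - apply bcont_sub; auto. apply rcont_bcont; auto.
    - intros; split; apply Hpt; simpl; lra.
    - intros; split; apply Hpt; simpl; lra. }
  replace (rx1 Q - rx0 Q + (ry1 Q - ry0 Q)) with (K * h) in H by (unfold K; lra).
  unfold eta at 1 in G. unfold Q0 in G; simpl in G. fold c in G.
  assert ((/4)^N = h * h). { unfold h. rewrite <- Rpow_mult_distr. f_equal. field. }
  assert (0 < (/4)^N) by (apply pow_lt; lra).
  unfold ep in H. 
  assert (4 * (c / (8 * K * K) * (K * h)) * (K * h) = c / 2 * (h * h)) by (field; lra).
  rewrite H2, <- H0 in H. nra.
Qed.
End Goursat.

Ltac mn := first [ apply Rle_refl | eapply Rle_trans; [apply Rmin_l|]; mn | eapply Rle_trans; [apply Rmin_r|]; mn ].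

Theorem goursat_exc : forall phi zx zy x0 x1 y0 y1,
  x0 < zx < x1 -> y0 < zy < y1 -> ccont phi (zx, zy) ->
  (forall x y, x0 <= x <= x1 -> y0 <= y <= y1 -> (x, y) <> (zx, zy) -> exists l, cdif phi (x, y) l) ->
  cint phi x0 x1 y0 y1 = Czero.
Proof.
  intros phi zx zy x0 x1 y0 y1 Hzx Hzy Hcz Hd.
  assert (Hrc : rcont phi x0 x1 y0 y1).
  { repeat split; try lra. intros x y Hx Hy. destruct (Ceq_dec (x,y) (zx,zy)) as [E|Ne].
    rewrite E; auto. destruct (Hd x y Hx Hy Ne) as [l Hl]. eapply cdif_cont; eauto. }
  destruct (Ceq_dec (cint phi x0 x1 y0 y1) Czero) as [E|Hne]; auto. exfalso.
  set (c := Cnorm (cint phi x0 x1 y0 y1)).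
  assert (Hc : 0 < c) by (apply Cnorm_pos; auto).
  set (M := Cnorm (phi (zx,zy)) + 1).
  assert (HM : 0 < M) by (unfold M; pose proof (Cnorm_ge0 (phi (zx,zy))); lra).
  destruct (Hcz 1 ltac:(lra)) as [d0 [Hd0 Hball]].
  set (d := Rmin (Rmin (Rmin (d0/4) ((zx - x0)/2)) (Rmin ((x1 - zx)/2) ((zy - y0)/2)))
                 (Rmin ((y1 - zy)/2) (c / (64 * M)))).
  assert (Hdpos : 0 < d).
  { unfold d. repeat apply Rmin_pos; try lra. apply Rdiv_lt_0_compat; nra. }
  assert (d <= d0/4 /\ d <= (zx-x0)/2 /\ d <= (x1-zx)/2 /\ d <= (zy-y0)/2 /\ d <= (y1-zy)/2 /\ d <= c/(64*M)).
  { unfold d. repeat split; mn. }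
  destruct H as [D1 [D2 [D3 [D4 [D5 D6]]]]].
  assert (Hg : forall a0 a1 b0 b1, x0 <= a0 -> a0 < a1 -> a1 <= x1 -> y0 <= b0 -> b0 < b1 -> b1 <= y1 ->
     (a1 < zx \/ zx < a0 \/ b1 < zy \/ zy < b0) -> cint phi a0 a1 b0 b1 = Czero).
  { intros. apply goursat; auto. intros. apply Hd; try lra. intro E. injection E; intros; subst. lra. }
  assert (Hb : Cnorm (cint phi (zx - d) (zx + d) (zy - d) (zy + d)) <= 4 * M * ((zx + d - (zx - d)) + (zy + d - (zy - d)))).
  { assert (Hpt : forall x y, zx - d <= x <= zx + d -> zy - d <= y <= zy + d -> Cnorm (phi (x,y)) <= M).
    { intros. assert (Cnorm (Csub (x,y) (zx,zy)) < d0).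
      { eapply Rle_lt_trans; [apply Cnorm_le_abs|]. unfold Csub, Cadd, Copp; simpl.
        assert (Rabs (x + - zx) <= d) by (apply Rabs_le; lra).
        assert (Rabs (y + - zy) <= d) by (apply Rabs_le; lra). lra. }
      specialize (Hball _ H1). pose proof (Cnorm_tri (Csub (phi (x,y)) (phi (zx,zy))) (phi (zx,zy))).
      replace (Cadd (Csub (phi (x, y)) (phi (zx, zy))) (phi (zx, zy))) with (phi (x,y)) in H2 by ring.
      unfold M; lra. }
    apply cint_bound. apply rcont_bcont. eapply rcont_sub; eauto; lra.
    intros; split; apply Hpt; lra. intros; split; apply Hpt; lra. }
  assert (E : cint phi x0 x1 y0 y1 = cint phi (zx - d) (zx + d) (zy - d) (zy + d)).
  {   rewrite (vsplit phi x0 (zx - d) x1 y0 y1) by (auto; lra).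
  rewrite (Hg x0 (zx - d) y0 y1) by lra.
  rewrite (vsplit phi (zx - d) (zx + d) x1 y0 y1) by (try lra; eapply rcont_sub; eauto; lra).
  rewrite (Hg (zx + d) x1 y0 y1) by lra.
  rewrite (hsplit phi (zx - d) (zx + d) y0 (zy - d) y1) by (try lra; eapply rcont_sub; eauto; lra).
  rewrite (Hg (zx - d) (zx + d) y0 (zy - d)) by lra.
  rewrite (hsplit phi (zx - d) (zx + d) (zy - d) (zy + d) y1) by (try lra; eapply rcont_sub; eauto; lra).
  rewrite (Hg (zx - d) (zx + d) (zy + d) y1) by lra.
    ring. }
  assert (c <= 16 * M * d).
  { unfold c; rewrite E. replace (16 * M * d) with (4 * M * ((zx + d - (zx - d)) + (zy + d - (zy - d)))) by ring. auto. }
  assert (16 * M * d <= c / 4).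
  { apply Rle_trans with (16 * M * (c / (64 * M))). apply Rmult_le_compat_l; lra. right; field; lra. }
  lra.
Qed.

Lemma cdif_invlin : forall z w, w <> z -> exists l, cdif (fun u => Cinv (Csub u z)) w l.
Proof. intros. eexists. apply cdif_inv. apply cdif_sub. apply cdif_id. apply cdif_const.
  apply sub_neq0; auto. Qed.

Lemma cdif_ex_mul : forall f g w, (exists l, cdif f w l) -> (exists l, cdif g w l) ->
  exists l, cdif (fun u => Cmul (f u) (g u)) w l.
Proof. intros f g w [l1 H1] [l2 H2]. eexists; apply cdif_mul; eauto. Qed.

Lemma cdif_ex_sub : forall f g w, (exists l, cdif f w l) -> (exists l, cdif g w l) ->
  exists l, cdif (fun u => Csub (f u) (g u)) w l.
Proof. intros f g w [l1 H1] [l2 H2]. eexists; apply cdif_sub; eauto. Qed.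

Lemma cdif_ex_const : forall c w, exists l, cdif (fun _ => c) w l.
Proof. intros; eexists; apply cdif_const. Qed.

Lemma cdif_ex_cont : forall f w, (exists l, cdif f w l) -> ccont f w.
Proof. intros f w [l H]; eapply cdif_cont; eauto. Qed.

Lemma bcont_of : forall f x0 x1 y0 y1, x0 <= x1 -> y0 <= y1 ->
  (forall x y, ((x0 <= x <= x1 /\ (y = y0 \/ y = y1)) \/ (y0 <= y <= y1 /\ (x = x0 \/ x = x1))) -> ccont f (x, y)) ->
  bcont f x0 x1 y0 y1.
Proof. intros. repeat split; auto; intros; apply H1; auto. Qed.

Theorem cauchy : forall F x0 x1 y0 y1 zx zy,
  x0 < zx < x1 -> y0 < zy < y1 ->
  (forall x y, x0 <= x <= x1 -> y0 <= y <= y1 -> exists l, cdif F (x, y) l) ->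
  cint (fun w => Cmul (F w) (Cinv (Csub w (zx, zy)))) x0 x1 y0 y1 =
  Cmul (F (zx, zy)) (cint (fun w => Cinv (Csub w (zx, zy))) x0 x1 y0 y1).
Proof.
  intros F x0 x1 y0 y1 zx zy Hzx Hzy Hd. set (z := (zx, zy)).
  destruct (Hd zx zy ltac:(lra) ltac:(lra)) as [l Hl]. fold z in Hl.
  set (s := slope F z l).
  assert (Hs0 : cint s x0 x1 y0 y1 = Czero).
  { apply (goursat_exc s zx zy); auto.
    intros x y Hx Hy Hne. fold z in Hne.
    destruct (cdif_ex_mul (fun u => Csub (F u) (F z)) (fun u => Cinv (Csub u z)) (x,y)) as [l' Hl'].
    { apply cdif_ex_sub. apply Hd; auto. apply cdif_ex_const. }
    { apply cdif_invlin; auto. }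
    exists l'. apply cdif_local with (g := fun u => Cmul (Csub (F u) (F z)) (Cinv (Csub u z))) (r := Cnorm (Csub (x,y) z)).
    apply Cnorm_pos, sub_neq0; auto.
    2: exact Hl'.
    intros w Hw. unfold s. rewrite slope_ne. reflexivity.
    intro E; rewrite E in Hw. rewrite Cnorm_sub_sym in Hw. lra. }
  assert (Hbd : forall x y, ((x0 <= x <= x1 /\ (y = y0 \/ y = y1)) \/ (y0 <= y <= y1 /\ (x = x0 \/ x = x1))) ->
      x0 <= x <= x1 /\ y0 <= y <= y1 /\ (x, y) <> z).
  { intros x y H. unfold z. repeat split; try (destruct H as [[? [?|?]]|[? [?|?]]]; subst; lra).
    intro E; injection E; intros; subst; destruct H as [[? [?|?]]|[? [?|?]]]; lra. }
  assert (HG : bcont (fun w => Cmul (F w) (Cinv (Csub w z))) x0 x1 y0 y1).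
  { apply bcont_of; try lra. intros x y H. destruct (Hbd x y H) as [? [? ?]].
    apply cdif_ex_cont, cdif_ex_mul. apply Hd; auto. apply cdif_invlin; auto. }
  assert (HI : bcont (fun w => Cinv (Csub w z)) x0 x1 y0 y1).
  { apply bcont_of; try lra. intros x y H. destruct (Hbd x y H) as [? [? ?]].
    apply cdif_ex_cont. apply cdif_invlin; auto. }
  assert (HS : bcont s x0 x1 y0 y1).
  { apply bcont_of; try lra. intros x y H. destruct (Hbd x y H) as [? [? ?]].
    apply ccont_local with (f := fun u => Cmul (Csub (F u) (F z)) (Cinv (Csub u z))) (r := Cnorm (Csub (x,y) z)).
    apply Cnorm_pos, sub_neq0; auto.
    intros w Hw. unfold s. rewrite slope_ne. reflexivity.
    intro E; rewrite E in Hw. rewrite Cnorm_sub_sym in Hw. lra.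
    apply cdif_ex_cont, cdif_ex_mul. apply cdif_ex_sub. apply Hd; auto. apply cdif_ex_const. apply cdif_invlin; auto. }
  assert (E : Csub (cint (fun w => Cmul (F w) (Cinv (Csub w z))) x0 x1 y0 y1)
                   (Cmul (F z) (cint (fun w => Cinv (Csub w z)) x0 x1 y0 y1)) = cint s x0 x1 y0 y1).
  { rewrite <- cint_scal, <- cint_sub; auto. 2: apply bcont_scal; auto.
    assert (Hbs : forall x y, ((x0 <= x <= x1 /\ (y = y0 \/ y = y1)) \/ (y0 <= y <= y1 /\ (x = x0 \/ x = x1))) ->
      Csub (Cmul (F (x,y)) (Cinv (Csub (x,y) z))) (Cmul (F z) (Cinv (Csub (x,y) z))) = s (x,y)).
    { intros x y H. destruct (Hbd x y H) as [? [? ?]]. unfold s. rewrite slope_ne by auto.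
      unfold Cdiv. ring. }
    apply cint_ext. apply bcont_sub; auto. apply bcont_scal; auto. auto.
    intros; split; apply Hbs; auto. intros; split; apply Hbs; auto. }
  rewrite Hs0 in E. fold z.
  replace (cint (fun w => Cmul (F w) (Cinv (Csub w z))) x0 x1 y0 y1) with
    (Cadd (Csub (cint (fun w => Cmul (F w) (Cinv (Csub w z))) x0 x1 y0 y1)
                   (Cmul (F z) (cint (fun w => Cinv (Csub w z)) x0 x1 y0 y1))) (Cmul (F z) (cint (fun w => Cinv (Csub w z)) x0 x1 y0 y1))) by ring.
  rewrite E; ring.
Qed.

Lemma ccont1_norm : forall g t, ccont1 g t -> continuity_pt (fun s => Cnorm (g s)) t.
Proof. intros g t H. unfold continuity_pt, continue_in, limit1_in, limit_in; simpl; unfold R_dist.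
  intros e He. destruct (H e He) as [d [Hd Hs]]. exists d; split; auto. intros s [_ Hst].
  eapply Rle_lt_trans; [|apply (Hs s Hst)]. apply Rabs_le. split.
  - pose proof (Cnorm_sub_tri (g t) (g s)). rewrite Cnorm_sub_sym in H0. lra.
  - apply Cnorm_sub_tri. Qed.

Lemma edge_max : forall g a b, cint1 g a b -> exists M, forall t, a <= t <= b -> Cnorm (g t) <= M.
Proof. intros g a b [Hab H]. destruct (continuity_ab_maj (fun s => Cnorm (g s)) a b Hab) as [m [Hm _]].
  intros; apply ccont1_norm; auto. exists (Cnorm (g m)); auto. Qed.

Lemma bcont_max : forall f x0 x1 y0 y1, bcont f x0 x1 y0 y1 -> exists M, 0 <= M /\
  (forall t, x0 <= t <= x1 -> Cnorm (f (t,y0)) <= M /\ Cnorm (f (t,y1)) <= M) /\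
  (forall t, y0 <= t <= y1 -> Cnorm (f (x0,t)) <= M /\ Cnorm (f (x1,t)) <= M).
Proof. intros. destruct (edge_max _ _ _ (e_bot _ _ _ _ _ H)) as [M1 H1].
  destruct (edge_max _ _ _ (e_top _ _ _ _ _ H)) as [M2 H2].
  destruct (edge_max _ _ _ (e_left _ _ _ _ _ H)) as [M3 H3].
  destruct (edge_max _ _ _ (e_right _ _ _ _ _ H)) as [M4 H4].
  exists (Rmax (Rmax (Rmax M1 M2) (Rmax M3 M4)) 0). split. apply Rmax_r.
  assert (forall u, u <= M1 \/ u <= M2 \/ u <= M3 \/ u <= M4 -> u <= Rmax (Rmax (Rmax M1 M2) (Rmax M3 M4)) 0).
  { intros u Hu. eapply Rle_trans; [|apply Rmax_l].
    destruct Hu as [?|[?|[?|?]]]; [eapply Rle_trans; [|apply Rmax_l]; eapply Rle_trans; [|apply Rmax_l]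
     |eapply Rle_trans; [|apply Rmax_l]; eapply Rle_trans; [|apply Rmax_r]
     |eapply Rle_trans; [|apply Rmax_r]; eapply Rle_trans; [|apply Rmax_l]
     |eapply Rle_trans; [|apply Rmax_r]; eapply Rle_trans; [|apply Rmax_r]]; auto. }
  split; intros; split; apply H0; auto. Qed.

Lemma cdif_ex_pow : forall f w n, (exists l, cdif f w l) -> exists l, cdif (fun u => Cpow (f u) n) w l.
Proof. intros f w n [l H]. apply (cdif_pow f w l n H). Qed.

Section Square.
Variables (G : Cpx -> Cpx) (ax ay r : R).
Hypothesis Hr : 0 < r.
Hypothesis Hd : forall x y, ax - r <= x <= ax + r -> ay - r <= y <= ay + r -> exists l, cdif G (x, y) l.

Definition bd x y := (ax - r <= x <= ax + r /\ (y = ay - r \/ y = ay + r)) \/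
                     (ay - r <= y <= ay + r /\ (x = ax - r \/ x = ax + r)).

Lemma bd_in : forall x y, bd x y -> ax - r <= x <= ax + r /\ ay - r <= y <= ay + r.
Proof. intros x y [[? [?|?]]|[? [?|?]]]; subst; lra. Qed.

Lemma bd_far : forall x y, bd x y -> r <= Cnorm (Csub (x, y) (ax, ay)).
Proof. intros x y H. pose proof (Cnorm_fst (Csub (x,y) (ax,ay))). pose proof (Cnorm_snd (Csub (x,y) (ax,ay))).
  unfold Csub, Cadd, Copp in *; simpl in *.
  destruct H as [[? [?|?]]|[? [?|?]]]; subst.
  - assert (Rabs (ay - r + - ay) = r) by (replace (ay - r + - ay) with (- r) by ring; rewrite Rabs_Ropp, Rabs_right; lra). lra.
  - assert (Rabs (ay + r + - ay) = r) by (replace (ay + r + - ay) with r by ring; rewrite Rabs_right; lra). lra.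
  - assert (Rabs (ax - r + - ax) = r) by (replace (ax - r + - ax) with (- r) by ring; rewrite Rabs_Ropp, Rabs_right; lra). lra.
  - assert (Rabs (ax + r + - ax) = r) by (replace (ax + r + - ax) with r by ring; rewrite Rabs_right; lra). lra.
Qed.

Lemma bd_z : forall x y z, bd x y -> Cnorm (Csub z (ax, ay)) < r / 2 -> r / 2 <= Cnorm (Csub (x, y) z).
Proof. intros. pose proof (bd_far x y H). pose proof (Cnorm_sub_tri (Csub (x,y) (ax,ay)) (Csub z (ax,ay))).
  replace (Csub (Csub (x, y) (ax, ay)) (Csub z (ax, ay))) with (Csub (x,y) z) in H2 by ring. lra. Qed.

Lemma bd_ne : forall x y, bd x y -> (x, y) <> (ax, ay).
Proof. intros x y H E. pose proof (bd_far x y H). rewrite E in H0.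
  replace (Csub (ax, ay) (ax, ay)) with Czero in H0 by ring. rewrite Cnorm_C0 in H0; lra. Qed.

Lemma bd_nez : forall x y z, bd x y -> Cnorm (Csub z (ax, ay)) < r / 2 -> (x, y) <> z.
Proof. intros x y z H Hz E. pose proof (bd_z x y z H Hz). rewrite E in H0.
  replace (Csub z z) with Czero in H0 by ring. rewrite Cnorm_C0 in H0; lra. Qed.

Lemma sq_bcont : forall f, (forall x y, bd x y -> ccont f (x, y)) -> bcont f (ax - r) (ax + r) (ay - r) (ay + r).
Proof. intros. apply bcont_of; try lra. intros; apply H; auto. Qed.

Definition gk (k : nat) (w : Cpx) := Cmul (G w) (Cpow (Cinv (Csub w (ax, ay))) k).
Definition ez (z : Cpx) (w : Cpx) := Cmul (gk 3 w) (Cinv (Csub w z)).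
Definition Jk k := cint (gk k) (ax - r) (ax + r) (ay - r) (ay + r).
Definition Ez z := cint (ez z) (ax - r) (ax + r) (ay - r) (ay + r).

Lemma gk_dif : forall k x y, bd x y -> exists l, cdif (gk k) (x, y) l.
Proof. intros. unfold gk. apply cdif_ex_mul. destruct (bd_in x y H); apply Hd; auto.
  apply cdif_ex_pow. apply cdif_invlin. apply bd_ne; auto. Qed.

Lemma ez_dif : forall z x y, bd x y -> Cnorm (Csub z (ax, ay)) < r / 2 -> exists l, cdif (ez z) (x, y) l.
Proof. intros. unfold ez. apply cdif_ex_mul. apply gk_dif; auto.
  apply cdif_invlin. apply bd_nez; auto. Qed.

Lemma gk_bc : forall k, bcont (gk k) (ax - r) (ax + r) (ay - r) (ay + r).
Proof. intros; apply sq_bcont; intros; apply cdif_ex_cont, gk_dif; auto. Qed.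

Lemma ez_bc : forall z, Cnorm (Csub z (ax, ay)) < r / 2 -> bcont (ez z) (ax - r) (ax + r) (ay - r) (ay + r).
Proof. intros; apply sq_bcont; intros; apply cdif_ex_cont, ez_dif; auto. Qed.

Lemma expand_pt : forall z w, w <> (ax, ay) -> w <> z ->
  Cmul (G w) (Cinv (Csub w z)) =
  Cadd (Cadd (Cadd (gk 1 w) (Cmul (Csub z (ax,ay)) (gk 2 w)))
             (Cmul (Cmul (Csub z (ax,ay)) (Csub z (ax,ay))) (gk 3 w)))
       (Cmul (Cmul (Csub z (ax,ay)) (Cmul (Csub z (ax,ay)) (Csub z (ax,ay)))) (ez z w)).
Proof. intros. unfold ez, gk; simpl. field. split; apply sub_neq0; auto. Qed.

Lemma expansion : forall z, Cnorm (Csub z (ax, ay)) < r / 2 ->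
  cint (fun w => Cmul (G w) (Cinv (Csub w z))) (ax - r) (ax + r) (ay - r) (ay + r) =
  Cadd (Cadd (Cadd (Jk 1) (Cmul (Csub z (ax,ay)) (Jk 2)))
             (Cmul (Cmul (Csub z (ax,ay)) (Csub z (ax,ay))) (Jk 3)))
       (Cmul (Cmul (Csub z (ax,ay)) (Cmul (Csub z (ax,ay)) (Csub z (ax,ay)))) (Ez z)).
Proof. intros z Hz. set (h := Csub z (ax, ay)).
  unfold Jk, Ez.
  rewrite <- !cint_scal, <- !cint_add; try apply gk_bc; try apply ez_bc; auto;
    repeat first [apply bcont_add | apply bcont_scal | apply gk_bc | apply ez_bc; auto].
  apply cint_ext.
  - apply sq_bcont. intros. apply cdif_ex_cont, cdif_ex_mul. destruct (bd_in x y H); apply Hd; auto.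
    apply cdif_invlin. apply bd_nez; auto.
  - repeat first [apply bcont_add | apply bcont_scal | apply gk_bc | apply ez_bc; auto].
  - intros t Ht; split; apply expand_pt; try apply bd_ne; try apply bd_nez; unfold bd; auto; lra.
  - intros t Ht; split; apply expand_pt; try apply bd_ne; try apply bd_nez; unfold bd; auto; lra.
Qed.
Lemma Ez_bound : exists B, forall z, Cnorm (Csub z (ax, ay)) < r / 2 -> Cnorm (Ez z) <= B.
Proof. destruct (bcont_max _ _ _ _ _ (gk_bc 3)) as [M [HM0 [HM1 HM2]]].
  exists (4 * (M * (2 / r)) * ((ax + r - (ax - r)) + (ay + r - (ay - r)))). intros z Hz.
  assert (Hpt : forall x y, bd x y -> Cnorm (gk 3 (x,y)) <= M -> Cnorm (ez z (x,y)) <= M * (2 / r)).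
  { intros x y Hb HM. unfold ez. rewrite Cnorm_mul, Cnorm_inv by (apply sub_neq0, bd_nez; auto).
    pose proof (bd_z x y z Hb Hz). apply Rmult_le_compat; auto. apply Cnorm_ge0.
    left; apply Rinv_0_lt_compat; lra.
    replace (2 / r) with (/ (r/2)) by (field; lra). apply Rinv_le_contravar; lra. }
  apply cint_bound. apply ez_bc; auto.
  intros t Ht; split; apply Hpt; try (apply HM1; auto); unfold bd; auto.
  intros t Ht; split; apply Hpt; try (apply HM2; auto); unfold bd; auto. Qed.
End Square.

Lemma RI_upper : forall f a b m, rint f a b -> (forall t, a <= t <= b -> f t <= m) -> RI f a b <= m * (b - a).
Proof. intros. rewrite <- RI_const. apply RI_le; auto. apply rint_const; apply H. Qed.

Lemma frac_lb : forall s r, 0 < r -> s * s <= r * r -> / (2 * r) <= r / (s * s + r * r).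
Proof. intros. apply Rmult_le_reg_l with (2 * r * (s * s + r * r)). apply Rmult_lt_0_compat; [lra| nra].
  replace (2 * r * (s * s + r * r) * / (2 * r)) with (s * s + r * r) by (field; lra).
  replace (2 * r * (s * s + r * r) * (r / (s * s + r * r))) with (2 * r * r) by (field; nra). nra. Qed.

Lemma cint_snd : forall phi x0 x1 y0 y1, snd (cint phi x0 x1 y0 y1) =
  RI (fun t => snd (phi (t,y0))) x0 x1 - RI (fun t => snd (phi (t,y1))) x0 x1 +
  (RI (fun t => fst (phi (x1,t))) y0 y1 - RI (fun t => fst (phi (x0,t))) y0 y1).
Proof. intros. unfold cint, CI, Ci, Cadd, Csub, Cmul, Copp; simpl. ring. Qed.

Lemma I0_pos : forall ax ay r, 0 < r ->
  4 <= snd (cint (fun w => Cinv (Csub w (ax, ay))) (ax - r) (ax + r) (ay - r) (ay + r)).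
Proof. intros ax ay r Hr.
  assert (HI : bcont (fun w => Cinv (Csub w (ax, ay))) (ax - r) (ax + r) (ay - r) (ay + r)).
  { apply sq_bcont; auto. intros. apply cdif_ex_cont, cdif_invlin, (bd_ne ax ay r); auto. }
  pose proof (cint1_snd _ _ _ (e_bot _ _ _ _ _ HI)) as R1.
  pose proof (cint1_snd _ _ _ (e_top _ _ _ _ _ HI)) as R2.
  pose proof (cint1_fst _ _ _ (e_right _ _ _ _ _ HI)) as R3.
  pose proof (cint1_fst _ _ _ (e_left _ _ _ _ _ HI)) as R4.
  assert (L1 : / (2 * r) * (ax + r - (ax - r)) <= RI (fun t => snd (Cinv (Csub (t, ay - r) (ax, ay)))) (ax - r) (ax + r)).
  { apply RI_lower; auto. intros. unfold Cinv, Csub, Cadd, Copp; simpl.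
    replace (- (ay - r + - ay)) with r by ring. replace ((ay - r + - ay) * (ay - r + - ay)) with (r * r) by ring.
    apply frac_lb; auto. nra. }
  assert (L2 : RI (fun t => snd (Cinv (Csub (t, ay + r) (ax, ay)))) (ax - r) (ax + r) <= - / (2 * r) * (ax + r - (ax - r))).
  { apply RI_upper; auto. intros. unfold Cinv, Csub, Cadd, Copp; simpl.
    replace (- (ay + r + - ay)) with (- r) by ring. replace ((ay + r + - ay) * (ay + r + - ay)) with (r * r) by ring.
    assert (/ (2 * r) <= r / ((t + - ax) * (t + - ax) + r * r)) by (apply frac_lb; auto; nra).
    unfold Rdiv in *. lra. }
  assert (L3 : / (2 * r) * (ay + r - (ay - r)) <= RI (fun t => fst (Cinv (Csub (ax + r, t) (ax, ay)))) (ay - r) (ay + r)).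
  { apply RI_lower; auto. intros. unfold Cinv, Csub, Cadd, Copp; simpl.
    replace (ax + r + - ax) with r by ring.
    replace (r * r + (t + - ay) * (t + - ay)) with ((t + - ay) * (t + - ay) + r * r) by ring.
    apply frac_lb; auto. nra. }
  assert (L4 : RI (fun t => fst (Cinv (Csub (ax - r, t) (ax, ay)))) (ay - r) (ay + r) <= - / (2 * r) * (ay + r - (ay - r))).
  { apply RI_upper; auto. intros. unfold Cinv, Csub, Cadd, Copp; simpl.
    replace (ax - r + - ax) with (- r) by ring.
    replace (- r * - r + (t + - ay) * (t + - ay)) with ((t + - ay) * (t + - ay) + r * r) by ring.
    assert (/ (2 * r) <= r / ((t + - ay) * (t + - ay) + r * r)) by (apply frac_lb; auto; nra).
    unfold Rdiv in *. lra. }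
  replace (/ (2 * r) * (ax + r - (ax - r))) with 1 in L1 by (field; lra).
  replace (/ (2 * r) * (ay + r - (ay - r))) with 1 in L3 by (field; lra).
  replace (- / (2 * r) * (ax + r - (ax - r))) with (-1) in L2 by (field; lra).
  replace (- / (2 * r) * (ay + r - (ay - r))) with (-1) in L4 by (field; lra).
  rewrite cint_snd. lra.
Qed.

Lemma interior : forall ax ay r z, 0 < r -> Cnorm (Csub z (ax, ay)) < r / 2 ->
  ax - r < fst z < ax + r /\ ay - r < snd z < ay + r.
Proof. intros ax ay r [zx zy] Hr H. pose proof (Cnorm_fst (Csub (zx,zy) (ax,ay))).
  pose proof (Cnorm_snd (Csub (zx,zy) (ax,ay))). unfold Csub, Cadd, Copp in *; simpl in *.
  assert (Rabs (zx + - ax) < r / 2) by lra. assert (Rabs (zy + - ay) < r / 2) by lra.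
  apply Rabs_def2 in H2. apply Rabs_def2 in H3.
  split; split; lra. Qed.


Ltac subbound := match goal with
  | |- Cnorm (Csub ?A ?B) <= ?R1 + ?R2 => eapply Rle_trans; [apply Cnorm_sub_le|]; apply Rplus_le_compat; [subbound | rewrite ?Cnorm_mul; lra]
  | |- Cnorm ?X <= ?R => rewrite ?Cnorm_mul; lra end.

Theorem taylor2 : forall F ax ay r, 0 < r ->
  (forall x y, ax - r <= x <= ax + r -> ay - r <= y <= ay + r -> exists l, cdif F (x, y) l) ->
  exists d1 c2 rho B, 0 < rho /\ forall z, Cnorm (Csub z (ax, ay)) < rho ->
    Cnorm (Csub (Csub (Csub (F z) (F (ax, ay))) (Cmul d1 (Csub z (ax, ay))))
                (Cmul c2 (Cmul (Csub z (ax, ay)) (Csub z (ax, ay)))))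
    <= B * (Cnorm (Csub z (ax, ay)) * (Cnorm (Csub z (ax, ay)) * Cnorm (Csub z (ax, ay)))).
Proof.
  intros F ax ay r Hr Hd.
  set (one := fun _ : Cpx => Cone).
  assert (Hd1 : forall x y, ax - r <= x <= ax + r -> ay - r <= y <= ay + r -> exists l, cdif one (x, y) l).
  { intros; apply cdif_ex_const. }
  set (a := (ax, ay)).
  set (I0 := Jk one ax ay r 1).
  assert (EI0 : I0 = cint (fun w => Cinv (Csub w a)) (ax - r) (ax + r) (ay - r) (ay + r)).
  { unfold I0, Jk, gk, one. f_equal. apply functional_extensionality; intros; unfold a; simpl; ring. }
  assert (HI0 : I0 <> Czero).
  { rewrite EI0. intro E. pose proof (I0_pos ax ay r Hr). fold a in H. rewrite E in H. simpl in H. lra. }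
  assert (EN1 : Jk F ax ay r 1 = Cmul (F a) I0).
  { rewrite EI0. unfold Jk, gk, a. rewrite <- (cauchy F (ax - r) (ax + r) (ay - r) (ay + r) ax ay); try lra; auto.
    f_equal. apply functional_extensionality; intros; unfold a; simpl; ring. }
  set (d1 := Cdiv (Csub (Jk F ax ay r 2) (Cmul (F a) (Jk one ax ay r 2))) I0).
  set (c2 := Cdiv (Csub (Csub (Jk F ax ay r 3) (Cmul (F a) (Jk one ax ay r 3))) (Cmul d1 (Jk one ax ay r 2))) I0).
  destruct (Ez_bound F ax ay r Hr Hd) as [BF HBF].
  destruct (Ez_bound one ax ay r Hr Hd1) as [B1 HB1].
  set (BI := Cnorm (Jk one ax ay r 2) + Cnorm (Jk one ax ay r 3) + Rabs B1 + 1).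
  assert (HBI : 0 < BI).
  { unfold BI. pose proof (Cnorm_ge0 (Jk one ax ay r 2)). pose proof (Cnorm_ge0 (Jk one ax ay r 3)).
    pose proof (Rabs_pos B1). lra. }
  pose proof (Cnorm_pos _ HI0) as HnI0.
  set (rho := Rmin (Rmin (r / 2) 1) (Cnorm I0 / (2 * BI))).
  assert (Hrho : 0 < rho) by (unfold rho; repeat apply Rmin_pos; try lra; apply Rdiv_lt_0_compat; lra).
  set (BK := Rabs BF + Cnorm (F a) * Rabs B1 + Cnorm d1 * Cnorm (Jk one ax ay r 3) + Cnorm c2 * Cnorm (Jk one ax ay r 2)
             + Cnorm d1 * Rabs B1 + Cnorm c2 * Cnorm (Jk one ax ay r 3) + Cnorm c2 * Rabs B1).
  exists d1, c2, rho, (2 * BK / Cnorm I0). split; auto.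
  intros z Hz.
  assert (Hz2 : Cnorm (Csub z a) < r / 2) by (eapply Rlt_le_trans; [apply Hz|]; unfold rho; mn).
  assert (Hz1 : Cnorm (Csub z a) <= 1) by (left; eapply Rlt_le_trans; [apply Hz|]; unfold rho; mn).
  assert (Hz3 : Cnorm (Csub z a) * BI < Cnorm I0 / 2).
  { assert (Cnorm (Csub z a) < Cnorm I0 / (2 * BI)) by (eapply Rlt_le_trans; [apply Hz|]; unfold rho; mn).
    apply Rmult_lt_compat_r with (r := BI) in H; auto.
    replace (Cnorm I0 / (2 * BI) * BI) with (Cnorm I0 / 2) in H by (field; lra). auto. }
  set (h := Csub z a) in *.
  destruct (interior ax ay r z Hr Hz2) as [Hzx Hzy].
  pose proof (cauchy F (ax - r) (ax + r) (ay - r) (ay + r) (fst z) (snd z) Hzx Hzy Hd) as HC.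
  rewrite <- surjective_pairing in HC.
  pose proof (expansion F ax ay r Hr Hd z Hz2) as EF.
  pose proof (expansion one ax ay r Hr Hd1 z Hz2) as E1.
  replace (fun w => Cmul (one w) (Cinv (Csub w z))) with (fun w => Cinv (Csub w z)) in E1
    by (apply functional_extensionality; intros; unfold one; ring).
  rewrite EF, E1 in HC. fold a h I0 in HC. rewrite EN1 in HC.
  set (EFz := Ez F ax ay r z) in *. set (E1z := Ez one ax ay r z) in *.
  specialize (HBF z Hz2). specialize (HB1 z Hz2). fold EFz in HBF. fold E1z in HB1.
  set (J2 := Jk one ax ay r 2) in *. set (J3 := Jk one ax ay r 3) in *.
  set (Iz := Cadd (Cadd (Cadd I0 (Cmul h J2)) (Cmul (Cmul h h) J3)) (Cmul (Cmul h (Cmul h h)) E1z)) in *.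
  set (D := Csub (Csub (Csub (F z) (F a)) (Cmul d1 h)) (Cmul c2 (Cmul h h))).
  set (K := Csub (Csub (Csub (Csub (Csub (Csub EFz (Cmul (F a) E1z)) (Cmul d1 J3)) (Cmul c2 J2))
              (Cmul h (Cmul d1 E1z))) (Cmul h (Cmul c2 J3))) (Cmul (Cmul h h) (Cmul c2 E1z))).
  assert (HDK : Cmul D Iz = Cmul (Cmul h (Cmul h h)) K).
  { replace (Cmul D Iz) with (Csub (Cmul (F z) Iz) (Cmul (Cadd (Cadd (F a) (Cmul d1 h)) (Cmul c2 (Cmul h h))) Iz))
      by (unfold D; ring).
    rewrite <- HC. unfold Iz, K, c2, d1. field. auto. }
  pose proof (Cnorm_ge0 h) as Hh0. pose proof (Cnorm_ge0 E1z). pose proof (Cnorm_ge0 EFz).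
  pose proof (Cnorm_ge0 J2). pose proof (Cnorm_ge0 J3). pose proof (Cnorm_ge0 d1). pose proof (Cnorm_ge0 c2).
  pose proof (Cnorm_ge0 (F a)).
  assert (HE1 : Cnorm E1z <= Rabs B1) by (eapply Rle_trans; [apply HB1| apply Rle_abs]).
  assert (HEF : Cnorm EFz <= Rabs BF) by (eapply Rle_trans; [apply HBF| apply Rle_abs]).
  assert (HIz : Cnorm I0 / 2 <= Cnorm Iz).
  { assert (Cnorm (Csub Iz I0) <= Cnorm h * BI).
    { replace (Csub Iz I0) with (Cmul h (Cadd (Cadd J2 (Cmul h J3)) (Cmul (Cmul h h) E1z))) by (unfold Iz; ring).
      rewrite Cnorm_mul. apply Rmult_le_compat_l; auto.
      eapply Rle_trans; [apply Cnorm_tri|]. eapply Rle_trans; [apply Rplus_le_compat_r; apply Cnorm_tri|].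
      rewrite !Cnorm_mul. unfold BI.
      assert (Cnorm h * Cnorm J3 <= Cnorm J3) by (rewrite <- (Rmult_1_l (Cnorm J3)) at 2; apply Rmult_le_compat_r; lra).
      assert (Cnorm h * Cnorm h * Cnorm E1z <= Rabs B1).
      { apply Rle_trans with (1 * 1 * Cnorm E1z). apply Rmult_le_compat_r; auto. apply Rmult_le_compat; lra. lra. }
      lra. }
    pose proof (Cnorm_sub_tri I0 Iz). rewrite Cnorm_sub_sym in H7. lra. }
  assert (HK : Cnorm K <= BK).
  { assert (Cnorm K <= Cnorm EFz + Cnorm (F a) * Cnorm E1z + Cnorm d1 * Cnorm J3 + Cnorm c2 * Cnorm J2
       + Cnorm h * (Cnorm d1 * Cnorm E1z) + Cnorm h * (Cnorm c2 * Cnorm J3) + Cnorm h * Cnorm h * (Cnorm c2 * Cnorm E1z)).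
    { unfold K. subbound. }
    assert (Cnorm (F a) * Cnorm E1z <= Cnorm (F a) * Rabs B1) by (apply Rmult_le_compat_l; auto).
    assert (Cnorm h * (Cnorm d1 * Cnorm E1z) <= Cnorm d1 * Rabs B1).
    { apply Rle_trans with (1 * (Cnorm d1 * Rabs B1)); [|lra]. apply Rmult_le_compat; try lra.
      apply Rmult_le_pos; lra. apply Rmult_le_compat_l; lra. }
    assert (Cnorm h * (Cnorm c2 * Cnorm J3) <= Cnorm c2 * Cnorm J3).
    { apply Rle_trans with (1 * (Cnorm c2 * Cnorm J3)); [|lra]. apply Rmult_le_compat; try lra.
      apply Rmult_le_pos; lra. }
    assert (Cnorm h * Cnorm h * (Cnorm c2 * Cnorm E1z) <= Cnorm c2 * Rabs B1).
    { apply Rle_trans with (1 * 1 * (Cnorm c2 * Rabs B1)); [|lra]. apply Rmult_le_compat; try lra.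
      apply Rmult_le_pos; lra. apply Rmult_le_pos; lra. apply Rmult_le_compat; lra. apply Rmult_le_compat_l; lra. }
    unfold BK. lra. }
  assert (HD : Cnorm D * Cnorm Iz = Cnorm h * (Cnorm h * Cnorm h) * Cnorm K).
  { rewrite <- !Cnorm_mul. rewrite HDK. reflexivity. }
  fold D.
  assert (Cnorm D * (Cnorm I0 / 2) <= Cnorm h * (Cnorm h * Cnorm h) * BK).
  { apply Rle_trans with (Cnorm D * Cnorm Iz). apply Rmult_le_compat_l; auto. apply Cnorm_ge0.
    rewrite HD. apply Rmult_le_compat_l; auto. apply Rmult_le_pos; auto. apply Rmult_le_pos; auto. }
  apply Rmult_le_reg_r with (Cnorm I0 / 2). lra.
  replace (2 * BK / Cnorm I0 * (Cnorm h * (Cnorm h * Cnorm h)) * (Cnorm I0 / 2)) with (Cnorm h * (Cnorm h * Cnorm h) * BK)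
    by (field; lra). auto.
Qed.

Theorem div_holo : forall F a, holo F -> inD a ->
  exists Q, holo Q /\ forall z, F z = Cadd (F a) (Cmul (Csub z a) (Q z)).
Proof.
  intros F [ax ay] HF Ha.
  set (r := (1 - Cnorm (ax, ay)) / 4).
  assert (Hr : 0 < r) by (unfold r, inD in *; lra).
  assert (Hd : forall x y, ax - r <= x <= ax + r -> ay - r <= y <= ay + r -> exists l, cdif F (x, y) l).
  { intros. apply holo_cdif; auto. unfold inD.
    pose proof (Cnorm_tri (Csub (x,y) (ax,ay)) (ax,ay)). replace (Cadd (Csub (x, y) (ax, ay)) (ax, ay)) with (x,y) in H1 by (unfold Csub, Cadd, Copp; simpl; f_equal; ring).
    assert (Cnorm (Csub (x,y) (ax,ay)) <= 2 * r).
    { eapply Rle_trans; [apply Cnorm_le_abs|]. simpl.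
      assert (Rabs (x + - ax) <= r) by (apply Rabs_le; lra). assert (Rabs (y + - ay) <= r) by (apply Rabs_le; lra). lra. }
    unfold inD, r in *. lra. }
  destruct (taylor2 F ax ay r Hr Hd) as [d1 [c2 [rho [B [Hrho HT]]]]].
  set (a := (ax, ay)) in *.
  set (Q := fun z => if Ceq_dec z a then d1 else Cdiv (Csub (F z) (F a)) (Csub z a)).
  assert (HQid : forall z, F z = Cadd (F a) (Cmul (Csub z a) (Q z))).
  { intros z. unfold Q. destruct (Ceq_dec z a). subst; ring. field. apply sub_neq0; auto. }
  exists Q; split; auto.
  apply holo_intro. intros z Hz. destruct (Ceq_dec z a) as [E|Ne].
  - subst z. exists c2. unfold cdif.
    intros e He. exists (Rmin rho (e / (Rabs B + 1))). split.
    { apply Rmin_pos; auto. apply Rdiv_lt_0_compat; auto. pose proof (Rabs_pos B); lra. }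
    intros w Hw. rewrite slope_at. destruct (Ceq_dec w a) as [E|Nw].
    { subst. rewrite slope_at. replace (Csub c2 c2) with Czero by ring. rewrite Cnorm_C0; auto. }
    rewrite slope_ne by auto.
    assert (Hwr : Cnorm (Csub w a) < rho) by (eapply Rlt_le_trans; [apply Hw| apply Rmin_l]).
    assert (Hwe : Cnorm (Csub w a) < e / (Rabs B + 1)) by (eapply Rlt_le_trans; [apply Hw| apply Rmin_r]).
    specialize (HT w Hwr). fold a in HT.
    set (h := Csub w a) in *.
    assert (Hh : h <> Czero) by (apply sub_neq0; auto).
    pose proof (Cnorm_pos _ Hh) as Hhp.
    assert (Qa : Q a = d1) by (unfold Q; destruct (Ceq_dec a a); congruence).
    assert (Qw : Q w = Cdiv (Csub (F w) (F a)) h) by (unfold Q, h; destruct (Ceq_dec w a); [exfalso; auto| reflexivity]).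
    rewrite Qa, Qw.
    replace (Csub (Cdiv (Csub (Cdiv (Csub (F w) (F a)) h) d1) h) c2) with
      (Cdiv (Csub (Csub (Csub (F w) (F a)) (Cmul d1 h)) (Cmul c2 (Cmul h h))) (Cmul h h)) by (field; auto).
    rewrite Cnorm_div by (apply Cmul_neq0; auto). rewrite Cnorm_mul.
    apply Rle_lt_trans with (B * Cnorm h).
    + apply Rmult_le_reg_r with (Cnorm h * Cnorm h). nra.
      unfold Rdiv. rewrite Rmult_assoc, Rinv_l, Rmult_1_r by nra. nra.
    + apply Rle_lt_trans with (Rabs B * Cnorm h). apply Rmult_le_compat_r; [lra| apply Rle_abs].
      apply Rle_lt_trans with ((Rabs B + 1) * Cnorm h). nra.
      replace e with ((Rabs B + 1) * (e / (Rabs B + 1))) by (field; pose proof (Rabs_pos B); lra).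
      apply Rmult_lt_compat_l; auto. pose proof (Rabs_pos B); lra.
  - destruct (holo_cdif F z HF Hz) as [lF HlF].
    destruct (cdif_ex_mul (fun u => Csub (F u) (F a)) (fun u => Cinv (Csub u a)) z) as [l Hl].
    { apply cdif_ex_sub. eauto. apply cdif_ex_const. }
    { apply cdif_invlin; auto. }
    exists l. apply cdif_local with (g := fun u => Cmul (Csub (F u) (F a)) (Cinv (Csub u a))) (r := Cnorm (Csub z a)); auto.
    apply Cnorm_pos, sub_neq0; auto.
    intros w Hw. unfold Q. destruct (Ceq_dec w a) as [E|_]. 
    + rewrite E in Hw. rewrite Cnorm_sub_sym in Hw. lra.
    + reflexivity.
Qed.

Lemma deriv_from_Q : forall F Q a, (forall z, F z = Cadd (F a) (Cmul (Csub z a) (Q z))) -> ccont Q a ->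
  has_cderiv F a (Q a).
Proof. intros F Q a HQ Hc. apply cdif_to_hc. unfold cdif.
  apply ccont_ext with Q; auto. intros w. unfold slope. destruct (Ceq_dec w a). subst; auto.
  rewrite (HQ w). field. apply sub_neq0; auto. Qed.

Lemma Cpow_mul : forall x y n, Cpow (Cmul x y) n = Cmul (Cpow x n) (Cpow y n).
Proof. induction n; simpl. ring. rewrite IHn; ring. Qed.

Lemma holo_mul : forall f g, holo f -> holo g -> holo (fun z => Cmul (f z) (g z)).
Proof. intros. apply holo_intro; intros. apply cdif_ex_mul; apply holo_cdif; auto. Qed.

Lemma holo_pow : forall f n, holo f -> holo (fun z => Cpow (f z) n).
Proof. intros. apply holo_intro; intros. apply cdif_ex_pow; apply holo_cdif; auto. Qed.

Lemma holo_const : forall c, holo (fun _ => c).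
Proof. intros. apply holo_intro; intros. apply cdif_ex_const. Qed.

Theorem lemma5p3 (A : (Cpx -> Cpx) -> Prop) (alpha : Cpx) (psi f : Cpx -> Cpx) :
  cusp_algebra A -> simple_cusp A ->
  inD alpha -> alpha <> C0 ->
  A psi ->
  psi alpha = C0 ->
  (forall l, has_cderiv psi alpha l -> l <> C0) ->
  (forall z, inD z -> psi z = C0 -> z = alpha) ->
  A f -> f alpha = C0 ->
  exists g, A g /\ forall z, inD z -> z <> alpha -> g z = Cdiv (f z) (psi z).
Proof.
  intros [[Hholo [Hext [H1 [Hadd [Hsc Hmul]]]]] [_ [m [Hm Hzm]]]] _ Hal Hal0 Hpsi Hpa Hder Hzero Hf Hfa.
  destruct (div_holo f alpha (Hholo f Hf) Hal) as [Qf [HQf EQf]].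
  destruct (div_holo psi alpha (Hholo psi Hpsi) Hal) as [Qp [HQp EQp]].
  rewrite Hfa in EQf. rewrite Hpa in EQp.
  assert (HQp0 : forall z, inD z -> Qp z <> Czero).
  { intros z Hz E. destruct (Ceq_dec z alpha) as [->|Ne].
    - apply (Hder (Qp alpha)); auto. apply deriv_from_Q. rewrite Hpa; auto. apply holo_cont; auto.
    - apply Ne. apply Hzero; auto. rewrite EQp, E. ring. }
  set (g := fun z => Cmul (Qf z) (Cinv (Qp z))).
  assert (Hg : holo g).
  { apply holo_intro; intros z Hz. unfold g. apply cdif_ex_mul. apply holo_cdif; auto.
    destruct (holo_cdif Qp z HQp Hz) as [l Hl]. eexists; apply cdif_inv; eauto. }
  assert (Hgpsi : forall z, inD z -> Cmul (g z) (psi z) = f z).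
  { intros z Hz. unfold g. rewrite EQf, EQp. field. apply HQp0; auto. }
  exists g. split.
  2:{ intros z Hz Hne. rewrite <- (Hgpsi z Hz). field.
      intro E. apply Hne. apply Hzero; auto. }
  assert (In0 : inD Czero) by (unfold inD; rewrite Cnorm_C0; lra).
  set (c := psi Czero).
  assert (Hc : c <> Czero) by (intro E; apply Hal0; symmetry; apply Hzero; auto).
  destruct (div_holo psi Czero (Hholo psi Hpsi) In0) as [rr [Hrr Err]]. fold c in Err.
  assert (Aconst : forall k, A (fun _ => k)).
  { intros k. apply Hext with (fun z => Cmul k (Cone)). apply Hsc; auto. intros; ring. }
  set (u := fun z => Csub Cone (Cmul (Cinv c) (psi z))).
  assert (Hu : forall k, exists p, A p /\ forall z, Cpow (u z) k = Csub Cone (Cmul (psi z) (p z))).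
  { induction k.
    - exists (fun _ => Czero). split; auto. intros; simpl; ring.
    - destruct IHk as [p [Ap Ep]].
      exists (fun z => Cadd (Cadd (Cinv c) (p z)) (Cmul (Copp (Cinv c)) (Cmul (psi z) (p z)))).
      split.
      + apply Hadd. apply Hadd. apply Aconst. exact Ap. apply (Hsc (Copp (Cinv c)) (fun z => Cmul (psi z) (p z))). apply Hmul; auto.
      + intros z. simpl. rewrite Ep. unfold u. ring. }
  destruct (Hu m) as [p [Ap Ep]].
  set (hh := fun z => Cmul (g z) (Cpow (Cmul (Copp (Cinv c)) (rr z)) m)).
  assert (Hhh : holo hh).
  { apply holo_mul; [auto| apply holo_pow; apply holo_mul; [apply holo_const| auto]]. }
  apply Hext with (fun z => Cadd (Cmul (f z) (p z)) (Cmul (Cpow z m) (hh z))).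
  { apply Hadd. apply Hmul; auto. apply Hzm; auto. }
  intros z Hz.
  assert (Eu : Cmul z (Cmul (Copp (Cinv c)) (rr z)) = u z).
  { unfold u. rewrite Err. field. auto. }
  replace (Cmul (Cpow z m) (hh z)) with (Cmul (g z) (Cpow (u z) m)) by (unfold hh; rewrite <- Eu, Cpow_mul; ring).
  rewrite Ep, <- (Hgpsi z Hz). ring.
Qed.
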